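(* Let $F$ satisfy (G1)–(G3) and let $\mu$ be an ergodic stationary probability measure of $\Pi(F)$. Then $\mathcal I_\mu$ has arbitrarily small trapping neighborhoods: for every $\varepsilon>0$ there is a trapping domain $D=\bigsqcup_k\{k\}\times D_k$ with $I_{\mu,k}\subset D_k\subset U_\varepsilon(I_{\mu,k})$ for all $k$.
   Context: Setting: $N\ge1$; $\{0,1\}$-matrix $A=(a_{ij})$ with some power having all entries positive; stochastic matrix $\Pi=(\pi_{ij})$ with $\pi_{ij}>0$ iff $a_{ij}=1$. $I=[0,1]$; $f_1,\dots,f_N:I\to I$ strictly increasing $C^1$ diffeomorphisms onto their images with $f_k(I)\subset(0,1)$. $\mathcal I=\{1,\dots,N\}\times I$, $I_k=\{k\}\times I$. $(k,m)$ admissible iff $\pi_{km}>0$. $\Pi(F)$: Markov process on $\mathcal I$ jumping from $(i,x)$ to $(j,f_i(x))$ with probability $\pi_{ij}$. $\mu$ stationary iff $\mu_j=\sum_i\pi_{ij}(f_i)_*\mu_i$ for all $j$ ($\mu_k=\mu|_{I_k}$); ergodic = extreme point of the stationary probabilities. $A_{\mu,k}=\min\operatorname{supp}\mu_k$, $B_{\mu,k}=\max\operatorname{supp}\mu_k$, $I_{\mu,k}=[A_{\mu,k},B_{\mu,k}]$, $\mathcal I_\mu=\bigsqcup_k\{k\}\times I_{\mu,k}$. Domain: $D=\bigsqcup_k\{k\}\times D_k$, $D_k$ nonempty intervals; trapping if $f_k(D_k)\subset\mathrm{int}\,D_m$ (interior in $I$) for all admissible $(k,m)$. Admissible composition $f_{w_1\dots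 w_n}=f_{w_n}\circ\dots\circ f_{w_1}:I_{w_1}\to I_{w_{n+1}}$ with each $(w_i,w_{i+1})$, $i\le n$, admissible; simple transition: $w_1,\dots,w_{n+1}$ distinct; simple return: $w_1,\dots,w_n$ distinct and $w_{n+1}=w_1$. (G1) every fixed point $q$ of a simple return $g$ has $g'(q)\ne1$; (G2) no simple transition maps an attracting (resp. repelling) fixed point of a simple return to a repelling (resp. attracting) fixed point of a simple return; (G3) no $a_1,\dots,a_N\in I$ with $f_i(a_i)=a_j$ for all admissible $(i,j)$. *)

(* Defs.v *)
From Stdlib Require Import Reals Lra List.
Import ListNotations.
Open Scope R_scope.

(* ---------- finite sums and matrices (indices 0..N-1 stand for 1..N) ---------- *)
Fixpoint Rsum (n : nat) (g : nat -> R) : R :=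
  match n with O => 0 | S m => Rsum m g + g m end.

Fixpoint nsum (n : nat) (g : nat -> nat) : nat :=
  match n with O => 0%nat | S m => (nsum m g + g m)%nat end.

Fixpoint mpow (N : nat) (A : nat -> nat -> nat) (n : nat) : nat -> nat -> nat :=
  match n with
  | O => fun i j => if Nat.eqb i j then 1%nat else 0%nat
  | S m => fun i j => nsum N (fun l => (mpow N A m i l * A l j)%nat)
  end.

Definition zero_one_matrix (N : nat) (A : nat -> nat -> nat) : Prop :=
  forall i j, (i < N)%nat -> (j < N)%nat -> A i j = 0%nat \/ A i j = 1%nat.

Definition has_positive_power (N : nat) (A : nat -> nat -> nat) : Prop :=
  exists n, (0 < n)%nat /\
    forall i j, (i < N)%nat -> (j < N)%nat -> (0 < mpow N A n i j)%nat.

Definition stochastic (N : nat) (P : nat -> nat -> R) : Prop :=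
  (forall i j, (i < N)%nat -> (j < N)%nat -> 0 <= P i j) /\
  (forall i, (i < N)%nat -> Rsum N (fun j => P i j) = 1).

Definition compatible (N : nat) (A : nat -> nat -> nat) (P : nat -> nat -> R) : Prop :=
  forall i j, (i < N)%nat -> (j < N)%nat -> (0 < P i j <-> A i j = 1%nat).

Definition inI (x : R) : Prop := 0 <= x <= 1.

Definition good_map (f : R -> R) : Prop :=
  (forall x, inI x -> 0 < f x < 1) /\
  (forall x y, inI x -> inI y -> x < y -> f x < f y) /\
  exists df : R -> R,
    (forall x, inI x -> derivable_pt_lim f x (df x)) /\
    (forall x, inI x -> forall eps, 0 < eps -> exists delta, 0 < delta /\
        forall y, inI y -> Rabs (y - x) < delta -> Rabs (df y - df x) < eps) /\
    (forall x, inI x -> df x <> 0).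

Definition admissible (P : nat -> nat -> R) (k m : nat) : Prop := 0 < P k m.

Fixpoint adm_chain (N : nat) (P : nat -> nat -> R) (w : list nat) : Prop :=
  match w with
  | [] => True
  | k :: rest =>
      (k < N)%nat /\
      match rest with
      | [] => True
      | m :: _ => admissible P k m /\ adm_chain N P rest
      end
  end.

(* w = [w_1; ...; w_(n+1)] with n >= 1 *)
Definition admissible_word (N : nat) (P : nat -> nat -> R) (w : list nat) : Prop :=
  (2 <= length w)%nat /\ adm_chain N P w.

(* f_{w_1 ... w_n} = f_{w_n} o ... o f_{w_1} (the last letter w_(n+1) is only the target) *)
Fixpoint comp (f : nat -> R -> R) (w : list nat) : R -> R :=
  match w with
  | [] => fun x => x
  | k :: rest =>
      match rest with
      | [] => fun x => x
      | _ => fun x => comp f rest (f k x)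
      end
  end.

Definition simple_transition (N : nat) (P : nat -> nat -> R) (w : list nat) : Prop :=
  admissible_word N P w /\ NoDup w.

Definition simple_return (N : nat) (P : nat -> nat -> R) (w : list nat) : Prop :=
  admissible_word N P w /\
  exists k w', w = (k :: w') ++ [k] /\ NoDup (k :: w').

Definition fixed_pt (g : R -> R) (q : R) : Prop := inI q /\ g q = q.

Definition attracting_fixed_pt (g : R -> R) (q : R) : Prop :=
  fixed_pt g q /\ exists l, derivable_pt_lim g q l /\ Rabs l < 1.

Definition repelling_fixed_pt (g : R -> R) (q : R) : Prop :=
  fixed_pt g q /\ exists l, derivable_pt_lim g q l /\ 1 < Rabs l.

Definition G1 (N : nat) (P : nat -> nat -> R) (f : nat -> R -> R) : Prop :=
  forall w q l, simple_return N P w -> fixed_pt (comp f w) q ->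
    derivable_pt_lim (comp f w) q l -> l <> 1.

Definition G2 (N : nat) (P : nat -> nat -> R) (f : nat -> R -> R) : Prop :=
  forall w u v q, simple_transition N P w -> simple_return N P u -> simple_return N P v ->
    hd O u = hd O w -> hd O v = last w O ->
    (attracting_fixed_pt (comp f u) q -> ~ repelling_fixed_pt (comp f v) (comp f w q)) /\
    (repelling_fixed_pt (comp f u) q -> ~ attracting_fixed_pt (comp f v) (comp f w q)).

Definition G3 (N : nat) (P : nat -> nat -> R) (f : nat -> R -> R) : Prop :=
  ~ exists a : nat -> R,
      (forall i, (i < N)%nat -> inI (a i)) /\
      (forall i j, (i < N)%nat -> (j < N)%nat -> admissible P i j -> f i (a i) = a j).

Definition sigma_algebra (S : (R -> Prop) -> Prop) : Prop :=
  S (fun _ => True) /\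
  (forall A, S A -> S (fun x => ~ A x)) /\
  (forall An : nat -> R -> Prop, (forall n, S (An n)) -> S (fun x => exists n, An n x)).

Definition borel (A : R -> Prop) : Prop :=
  forall S, sigma_algebra S ->
    (forall a b, S (fun x => a < x < b)) -> S A.

Definition finite_measure (mu : (R -> Prop) -> R) : Prop :=
  mu (fun _ => False) = 0 /\
  (forall A, borel A -> 0 <= mu A) /\
  (forall An : nat -> R -> Prop,
     (forall n, borel (An n)) ->
     (forall n m x, n <> m -> An n x -> An m x -> False) ->
     infinite_sum (fun n => mu (An n)) (mu (fun x => exists n, An n x))).

(* A measure on the disjoint union {1..N} x I is given by its restrictions
   mu_k (k < N), each a finite Borel measure on R concentrated on I. *)
Definition meas_on_union (N : nat) (mu : nat -> (R -> Prop) -> R) : Prop :=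
  forall k, (k < N)%nat -> finite_measure (mu k) /\ mu k (fun x => ~ inI x) = 0.

Definition prob_on_union (N : nat) (mu : nat -> (R -> Prop) -> R) : Prop :=
  meas_on_union N mu /\ Rsum N (fun k => mu k (fun _ => True)) = 1.

Definition stationary (N : nat) (P : nat -> nat -> R) (f : nat -> R -> R)
    (mu : nat -> (R -> Prop) -> R) : Prop :=
  prob_on_union N mu /\
  forall j A, (j < N)%nat -> borel A ->
    mu j A = Rsum N (fun i => P i j * mu i (fun x => inI x /\ A (f i x))).

Definition same_measure (N : nat) (mu nu : nat -> (R -> Prop) -> R) : Prop :=
  forall k A, (k < N)%nat -> borel A -> mu k A = nu k A.

(* ergodic = extreme point of the convex set of stationary probabilities *)
Definition ergodic (N : nat) (P : nat -> nat -> R) (f : nat -> R -> R)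
    (mu : nat -> (R -> Prop) -> R) : Prop :=
  stationary N P f mu /\
  forall nu1 nu2 t, 0 < t < 1 -> stationary N P f nu1 -> stationary N P f nu2 ->
    (forall k A, (k < N)%nat -> borel A -> mu k A = t * nu1 k A + (1 - t) * nu2 k A) ->
    same_measure N nu1 mu /\ same_measure N nu2 mu.

Definition supp (m : (R -> Prop) -> R) (x : R) : Prop :=
  forall delta, 0 < delta -> 0 < m (fun y => x - delta < y < x + delta).

(* I_{mu,k} = [min supp mu_k, max supp mu_k], written as the convex hull of the support *)
Definition I_mu (m : (R -> Prop) -> R) (x : R) : Prop :=
  exists a b, supp m a /\ supp m b /\ a <= x <= b.

Definition U_eps (eps : R) (S : R -> Prop) (y : R) : Prop :=
  exists x, S x /\ Rabs (y - x) < eps.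

Definition interval (D : R -> Prop) : Prop :=
  forall x y z, D x -> D y -> x <= z <= y -> D z.

Definition interior_I (D : R -> Prop) (x : R) : Prop :=
  D x /\ exists delta, 0 < delta /\ forall y, inI y -> Rabs (y - x) < delta -> D y.

Definition domain (N : nat) (D : nat -> R -> Prop) : Prop :=
  forall k, (k < N)%nat ->
    (exists x, D k x) /\ interval (D k) /\ (forall x, D k x -> inI x).

Definition trapping (N : nat) (P : nat -> nat -> R) (f : nat -> R -> R)
    (D : nat -> R -> Prop) : Prop :=
  domain N D /\
  forall k m x, (k < N)%nat -> (m < N)%nat -> admissible P k m -> D k x ->
    interior_I (D m) (f k x).

(* Main.v *)
Require Import Defs.
From Stdlib Require Import Reals List.
Open Scope R_scope.
From Stdlib Require Import Lra Lia ZArith Permutation Setoid FunctionalExtensionality PropExtensionality Classical ClassicalEpsilon.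
Import ListNotations.
Open Scope R_scope.

Lemma Rsum_ext n g h : (forall i, (i < n)%nat -> g i = h i) -> Rsum n g = Rsum n h.
Proof. induction n; simpl; intros H; auto. rewrite IHn by (intros; apply H; lia). rewrite H by lia. auto. Qed.

Lemma Rsum_le n g h : (forall i, (i < n)%nat -> g i <= h i) -> Rsum n g <= Rsum n h.
Proof. induction n; simpl; intros H; [lra|]. assert (Rsum n g <= Rsum n h) by (apply IHn; intros; apply H; lia).
 specialize (H n ltac:(lia)). lra. Qed.

Lemma Rsum_nonneg n g : (forall i, (i < n)%nat -> 0 <= g i) -> 0 <= Rsum n g.
Proof. intros H. replace 0 with (Rsum n (fun _ => 0)). apply Rsum_le; auto.
 induction n; simpl; auto. rewrite IHn; [lra|]. intros; apply H; lia. Qed.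

Lemma Rsum_zero n : Rsum n (fun _ => 0) = 0.
Proof. induction n; simpl; [auto|rewrite IHn; lra]. Qed.

Lemma Rsum_plus n g h : Rsum n (fun i => g i + h i) = Rsum n g + Rsum n h.
Proof. induction n; simpl; [lra|rewrite IHn; lra]. Qed.

Lemma Rsum_scal n c g : Rsum n (fun i => c * g i) = c * Rsum n g.
Proof. induction n; simpl; [lra|rewrite IHn; lra]. Qed.

Lemma Rsum_swap n m (g : nat -> nat -> R) :
  Rsum n (fun i => Rsum m (fun j => g i j)) = Rsum m (fun j => Rsum n (fun i => g i j)).
Proof. induction n; simpl. rewrite Rsum_zero; auto.
 rewrite IHn. rewrite <- Rsum_plus. auto. Qed.

Lemma Rsum_term_le n g k : (forall i, (i < n)%nat -> 0 <= g i) -> (k < n)%nat -> g k <= Rsum n g.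
Proof. induction n; simpl; intros H Hk; [lia|].
 assert (0 <= Rsum n g) by (apply Rsum_nonneg; intros; apply H; lia).
 destruct (Nat.eq_dec k n). subst. lra.
 assert (g k <= Rsum n g) by (apply IHn; [intros; apply H; lia|lia]). specialize (H n ltac:(lia)). lra. Qed.

Lemma Rsum_gap n g h k e : (forall i, (i < n)%nat -> g i <= h i) -> (k < n)%nat -> g k + e <= h k ->
  Rsum n g + e <= Rsum n h.
Proof. induction n; simpl; intros H Hk Hg; [lia|].
 destruct (Nat.eq_dec k n). subst. assert (Rsum n g <= Rsum n h) by (apply Rsum_le; intros; apply H; lia). lra.
 assert (Rsum n g + e <= Rsum n h) by (apply IHn; [intros; apply H; lia|lia|auto]).
 specialize (H n ltac:(lia)). lra. Qed.

Lemma fin_min (N : nat) (Q : nat -> R -> Prop) :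
  (forall k, (k < N)%nat -> exists t, 0 < t /\ forall s, 0 < s -> s < t -> Q k s) ->
  exists t, 0 < t /\ forall s, 0 < s -> s < t -> forall k, (k < N)%nat -> Q k s.
Proof. induction N; intros H. exists 1; split; [lra|intros; lia].
 destruct IHN as [t1 [Ht1 H1]]. intros; apply H; lia.
 destruct (H N ltac:(lia)) as [t2 [Ht2 H2]].
 exists (Rmin t1 t2). split. apply Rmin_pos; auto.
 intros s Hs Hst k Hk. assert (s < t1) by (apply Rlt_le_trans with (Rmin t1 t2); [auto|apply Rmin_l]).
 assert (s < t2) by (apply Rlt_le_trans with (Rmin t1 t2); [auto|apply Rmin_r]).
 destruct (Nat.eq_dec k N). subst; auto. apply H1; auto; lia. Qed.

Lemma fin_min_pos (N : nat) (g : nat -> R) : (forall k, (k < N)%nat -> 0 < g k) ->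
  exists c, 0 < c /\ forall k, (k < N)%nat -> c <= g k.
Proof. intros H. destruct (fin_min N (fun k s => s <= g k)) as [t [Ht Ht2]].
 intros k Hk. exists (g k). split; auto. intros; lra.
 exists (t/2). split. lra. intros k Hk. apply Ht2; auto; lra. Qed.

Lemma choice_nat {T : Type} (inh : T) (N : nat) (Q : nat -> T -> Prop) :
  (forall k, (k < N)%nat -> exists y, Q k y) -> exists g : nat -> T, forall k, (k < N)%nat -> Q k (g k).
Proof. intros H. exists (fun k => epsilon (inhabits inh) (Q k)).
 intros k Hk. apply epsilon_spec. auto. Qed.

Lemma set_ext (A B : R -> Prop) : (forall x, A x <-> B x) -> A = B.
Proof. intros H. apply functional_extensionality. intros x. apply propositional_extensionality. auto. Qed.

Lemma sa_union2 S A B : sigma_algebra S -> S A -> S B -> S (fun x => A x \/ B x).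
Proof. intros [H1 [H2 H3]] HA HB.
 replace (fun x => A x \/ B x) with (fun x => exists n, (fun n => match n with O => A | _ => B end) n x).
 apply H3. intros [|n]; auto.
 apply set_ext. intros x; split. intros [[|n] Hn]; auto. intros [H|H]. exists O; auto. exists 1%nat; auto. Qed.

Lemma borel_compl A : borel A -> borel (fun x => ~ A x).
Proof. intros H S HS Hi. apply HS. apply H; auto. Qed.

Lemma borel_union A B : borel A -> borel B -> borel (fun x => A x \/ B x).
Proof. intros HA HB S HS Hi. apply sa_union2; auto; [apply HA|apply HB]; auto. Qed.

Lemma borel_cunion (An : nat -> R -> Prop) : (forall n, borel (An n)) -> borel (fun x => exists n, An n x).
Proof. intros H S HS Hi. apply HS. intros n; apply H; auto. Qed.

Lemma borel_True : borel (fun _ => True).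
Proof. intros S HS _. apply HS. Qed.

Lemma borel_eq A B : borel A -> (forall x, A x <-> B x) -> borel B.
Proof. intros H E. replace B with A; auto. apply set_ext; auto. Qed.

Lemma borel_inter A B : borel A -> borel B -> borel (fun x => A x /\ B x).
Proof. intros HA HB. apply borel_eq with (A := fun x => ~ (~ A x \/ ~ B x)).
 apply borel_compl. apply borel_union; apply borel_compl; auto.
 intros x; cbv beta. split. intros H; split; apply NNPP; intro; apply H; auto. intros [Ha Hb] [Hc|Hc]; auto. Qed.

Lemma borel_False : borel (fun _ => False).
Proof. eapply borel_eq. apply borel_compl, borel_True. tauto. Qed.

Lemma borel_open a b : borel (fun x => a < x < b).
Proof. intros S HS Hi. apply Hi. Qed.

Lemma borel_lt b : borel (fun x => x < b).
Proof. eapply borel_eq. apply borel_cunion with (An := fun n x => b - INR n - 1 < x < b).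
 intros; apply borel_open. intros x; split. intros [n Hn]; lra.
 intros Hx. destruct (archimed (b - x)) as [H1 H2].
 assert (0 <= IZR (up (b - x))) by lra.
 exists (Z.to_nat (up (b - x))). rewrite INR_IZR_INZ. rewrite Z2Nat.id. lra.
 apply le_IZR. lra. Qed.

Lemma borel_gt a : borel (fun x => a < x).
Proof. eapply borel_eq. apply borel_cunion with (An := fun n x => a < x < a + INR n + 1).
 intros; apply borel_open. intros x; split. intros [n Hn]; lra.
 intros Hx. destruct (archimed (x - a)) as [H1 H2].
 assert (0 <= IZR (up (x - a))) by lra.
 exists (Z.to_nat (up (x - a))). rewrite INR_IZR_INZ. rewrite Z2Nat.id. lra.
 apply le_IZR. lra. Qed.

Lemma borel_ge a : borel (fun x => a <= x).
Proof. eapply borel_eq. apply borel_compl, borel_lt with (b := a). intros x; lra. Qed.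
Lemma borel_le b : borel (fun x => x <= b).
Proof. eapply borel_eq. apply borel_compl, borel_gt with (a := b). intros x; lra. Qed.
Lemma borel_singl a : borel (fun x => x = a).
Proof. eapply borel_eq. apply borel_inter; [apply borel_le with (b:=a)|apply borel_ge with (a:=a)]. intros x; lra. Qed.
Lemma borel_inI : borel inI.
Proof. eapply borel_eq. apply borel_inter; [apply borel_ge with (a:=0)|apply borel_le with (b:=1)]. unfold inI; intros x; lra. Qed.

Lemma sum_f_R0_two (g : nat -> R) n : (forall m, (2 <= m)%nat -> g m = 0) -> (1 <= n)%nat -> sum_f_R0 g n = g 0%nat + g 1%nat.
Proof. intros H Hn. induction n. lia. destruct n. simpl. auto. simpl in *. rewrite IHn by lia. rewrite (H (S (S n))) by lia. lra. Qed.

Lemma infinite_sum_two (g : nat -> R) : (forall m, (2 <= m)%nat -> g m = 0) -> infinite_sum g (g 0%nat + g 1%nat).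
Proof. intros H eps He. exists 1%nat. intros n Hn. rewrite sum_f_R0_two; auto. unfold R_dist. rewrite Rminus_diag, Rabs_R0. auto. Qed.

Lemma infinite_sum_zero (g : nat -> R) : (forall m, g m = 0) -> infinite_sum g 0.
Proof. intros H eps He. exists 0%nat. intros n Hn. replace (sum_f_R0 g n) with 0. unfold R_dist. rewrite Rminus_diag, Rabs_R0. auto.
 induction n; simpl; rewrite H; [auto|]. rewrite <- IHn; [lra|lia]. Qed.

Lemma meas_nonneg mu A : finite_measure mu -> borel A -> 0 <= mu A.
Proof. intros [_ [H _]] HA. auto. Qed.

Lemma meas_add mu A B : finite_measure mu -> borel A -> borel B -> (forall x, A x -> B x -> False) ->
  mu (fun x => A x \/ B x) = mu A + mu B.
Proof. intros [H0 [Hp Hc]] HA HB Hd.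
 set (An := fun n : nat => match n with O => A | S O => B | _ => fun _ : R => False end).
 assert (E : (fun x => A x \/ B x) = (fun x => exists n, An n x)).
 { apply set_ext. intros x; split. intros [h|h]. exists O; auto. exists 1%nat; auto.
   intros [[|[|n]] h]; simpl in h; auto. destruct h. }
 rewrite E. apply (uniqueness_sum (fun n => mu (An n))). apply Hc.
 intros [|[|n]]; simpl; auto. apply borel_False.
 intros [|[|n]] [|[|m]] x Hnm h1 h2; simpl in *; try (exfalso; lia); eauto.
 apply infinite_sum_two. intros [|[|m]] Hm; simpl; auto; lia. Qed.

Lemma meas_mono mu A B : finite_measure mu -> borel A -> borel B -> (forall x, A x -> B x) -> mu A <= mu B.
Proof. intros Hm HA HB Hs.
 assert (E : B = (fun x => A x \/ (B x /\ ~ A x))).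
 { apply set_ext. intros x; split. intros h. destruct (classic (A x)); auto. intros [h|[h _]]; auto. }
 rewrite E. rewrite meas_add; auto. assert (0 <= mu (fun x => B x /\ ~ A x)).
 apply meas_nonneg; auto. apply borel_inter; auto. apply borel_compl; auto. lra.
 apply borel_inter; auto. apply borel_compl; auto. intros x h [_ h2]; auto. Qed.

Lemma borel_fin_inter (An : nat -> R -> Prop) n : (forall m, borel (An m)) -> borel (fun x => forall m, (m < n)%nat -> ~ An m x).
Proof. intros H. induction n. eapply borel_eq. apply borel_True. intros x; split; auto; intros; lia.
 eapply borel_eq. apply borel_inter. apply IHn. apply borel_compl, (H n).
 intros x; split. intros [h1 h2] m Hm. destruct (Nat.eq_dec m n). subst; auto. apply h1; lia.
 intros h; split. intros m Hm; apply h; lia. apply h; lia. Qed.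

Lemma meas_null_union mu (An : nat -> R -> Prop) : finite_measure mu -> (forall n, borel (An n)) -> (forall n, mu (An n) = 0) ->
  mu (fun x => exists n, An n x) = 0.
Proof. intros Hm HB H0.
 set (Dn := fun n x => An n x /\ forall m, (m < n)%nat -> ~ An m x).
 assert (HD : forall n, borel (Dn n)). intros n. apply borel_inter; auto. apply borel_fin_inter; auto.
 assert (E : (fun x => exists n, An n x) = (fun x => exists n, Dn n x)).
 { apply set_ext. intros x; split. intros [n h]. revert h. induction n as [n IH] using (well_founded_induction lt_wf).
   intros h. destruct (classic (exists m, (m < n)%nat /\ An m x)) as [[m [hm1 hm2]]|hn]. apply (IH m); auto.
   exists n. split; auto. intros m hm ham. apply hn; eauto.
   intros [n [h _]]; eauto. }
 rewrite E. destruct Hm as [Hm0 [Hmp Hmc]] eqn:HH.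
 apply (uniqueness_sum (fun n => mu (Dn n))). apply Hmc; auto.
 intros n m x Hnm [h1 h2] [h3 h4]. destruct (Nat.lt_total n m) as [h|[h|h]]. apply (h4 n); auto. auto. apply (h2 m); auto.
 apply infinite_sum_zero. intros n. apply Rle_antisym. rewrite <- (H0 n). apply meas_mono; auto. intros x [h _]; auto.
 apply meas_nonneg; auto. Qed.

Lemma meas_restrict mu A : finite_measure mu -> mu (fun x => ~ inI x) = 0 -> borel A ->
  mu A = mu (fun x => inI x /\ A x).
Proof. intros Hm Hn HA.
 assert (E : A = (fun x => (inI x /\ A x) \/ (~ inI x /\ A x))).
 { apply set_ext. intros x; split. intros h. destruct (classic (inI x)); auto. intros [[_ h]|[_ h]]; auto. }
 assert (B1 : borel (fun x => inI x /\ A x)) by (apply borel_inter; auto; apply borel_inI).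
 assert (B2 : borel (fun x => ~ inI x /\ A x)) by (apply borel_inter; auto; apply borel_compl, borel_inI).
 assert (mu (fun x => ~ inI x /\ A x) = 0).
 { apply Rle_antisym. rewrite <- Hn. apply meas_mono; auto. apply borel_compl, borel_inI. intros x [h _]; auto.
   apply meas_nonneg; auto. }
 rewrite E at 1. rewrite meas_add; auto. lra. intros x [h _] [h' _]; auto. Qed.

Lemma meas_null_sub mu A Z : finite_measure mu -> borel A -> borel Z -> mu Z = 0 -> (forall x, A x -> Z x) -> mu A = 0.
Proof. intros Hm HA HZ H0 Hs. apply Rle_antisym. rewrite <- H0. apply meas_mono; auto. apply meas_nonneg; auto. Qed.

Definition convex (J : R -> Prop) : Prop := forall x y z, J x -> J y -> x <= z <= y -> J z.

Lemma borel_convex J lo hi : convex J -> (forall x, J x -> lo <= x <= hi) -> borel J.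
Proof. intros Hc Hb. destruct (classic (exists x, J x)) as [[x0 Hx0]|Hne].
 2:{ eapply borel_eq. apply borel_False. intros x; split; [tauto|intros h; apply Hne; eauto]. }
 destruct (completeness J) as [beta [Hb1 Hb2]]. exists hi. intros x h; apply Hb; auto. eauto.
 destruct (completeness (fun y => J (- y))) as [malpha [Ha1 Ha2]]. exists (- lo). intros x h. apply Hb in h. lra.
   exists (- x0). rewrite Ropp_involutive; auto.
 set (alpha := - malpha).
 assert (Hlo : forall x, J x -> alpha <= x). { intros x h. unfold alpha. assert (- x <= malpha). apply Ha1. rewrite Ropp_involutive; auto. lra. }
 assert (Hhi : forall x, J x -> x <= beta). { intros x h; apply Hb1; auto. }
 apply borel_eq with (A := fun x => (alpha < x < beta) \/ ((x = alpha /\ J alpha) \/ (x = beta /\ J beta))).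
 apply borel_union. apply borel_open.
 apply borel_union; [destruct (classic (J alpha)) as [h|h] | destruct (classic (J beta)) as [h|h]].
 all: try (eapply borel_eq; [apply borel_singl|]; intros x; split; [intros ->; auto|intros [e _]; auto]; fail).
 all: try (eapply borel_eq; [apply borel_False|]; intros x; split; [tauto|intros [e e']; subst; auto]; fail).
 intros x; split.
 - intros [[h1 h2]|[[-> h]|[-> h]]]; auto.
   assert (exists y, J y /\ y < x) as [y [hy1 hy2]].
   { apply NNPP; intros hn. assert (malpha <= - x). apply Ha2. intros z hz. apply Rnot_lt_le. intros hz2. apply hn. exists (- z). split; auto. lra. unfold alpha in h1; lra. }
   assert (exists y, J y /\ x < y) as [z [hz1 hz2]].
   { apply NNPP; intros hn. assert (beta <= x). apply Hb2. intros z hz. apply Rnot_lt_le. intros hz2. apply hn. exists z. split; auto. lra. }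
   apply (Hc y z x); auto; lra.
 - intros h. specialize (Hlo x h). specialize (Hhi x h). destruct (Req_dec x alpha). subst; auto.
   destruct (Req_dec x beta). subst; auto. left; lra. Qed.

Lemma deriv_cont g x l : derivable_pt_lim g x l ->
  forall eps, 0 < eps -> exists delta, 0 < delta /\ forall y, Rabs (y - x) < delta -> Rabs (g y - g x) < eps.
Proof. intros H eps He. destruct (H 1 Rlt_0_1) as [d Hd].
 assert (Hl : 0 < Rabs l + 1) by (pose proof (Rabs_pos l); lra).
 exists (Rmin d (eps / (Rabs l + 1))). split. apply Rmin_pos. apply cond_pos. apply Rdiv_lt_0_compat; lra.
 intros y Hy. destruct (Req_dec y x). subst. rewrite Rminus_diag, Rabs_R0; auto.
 assert (Hy1 : Rabs (y - x) < d) by (apply Rlt_le_trans with (1 := Hy); apply Rmin_l).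
 assert (Hy2 : Rabs (y - x) < eps / (Rabs l + 1)) by (apply Rlt_le_trans with (1 := Hy); apply Rmin_r).
 specialize (Hd (y - x) ltac:(lra) Hy1). replace (x + (y - x)) with y in Hd by ring.
 set (q := (g y - g x) / (y - x)) in Hd.
 assert (E : g y - g x = q * (y - x)) by (unfold q; field; lra). rewrite E, Rabs_mult.
 assert (Rabs q <= Rabs l + 1). { pose proof (Rabs_triang_inv q l). lra. }
 assert (0 < Rabs (y - x)) by (apply Rabs_pos_lt; lra).
 apply Rle_lt_trans with ((Rabs l + 1) * Rabs (y - x)). apply Rmult_le_compat_r; lra.
 apply Rmult_lt_reg_l with (/ (Rabs l + 1)). apply Rinv_0_lt_compat; lra.
 rewrite <- Rmult_assoc, Rinv_l by lra. unfold Rdiv in Hy2. lra. Qed.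

Lemma gm_mono g : good_map g -> forall x y, inI x -> inI y -> x <= y -> g x <= g y.
Proof. intros [_ [H _]] x y hx hy hxy. destruct (Req_dec x y). subst; lra. left; apply H; auto; lra. Qed.

Lemma gm_pre_borel g A : good_map g -> convex A -> borel (fun x => inI x /\ A (g x)).
Proof. intros Hg HA. apply borel_convex with 0 1. intros x y z [hx hax] [hy hay] hz.
 assert (hzI : inI z) by (unfold inI in *; lra). split; auto.
 apply (HA (g x) (g y)); auto. split; apply gm_mono; auto; lra. unfold inI; intros x [h _]; lra. Qed.

Lemma convex_lt b : convex (fun x => x < b). Proof. intros x y z h1 h2 h3; lra. Qed.
Lemma convex_open a b : convex (fun x => a < x < b). Proof. intros x y z h1 h2 h3; lra. Qed.
Lemma convex_True : convex (fun _ => True). Proof. intros x y z; auto. Qed.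

Lemma gm_deriv_nonneg g x l : good_map g -> 0 < x < 1 -> derivable_pt_lim g x l -> 0 <= l.
Proof. intros [_ [Hinc _]] Hx Hd. apply Rnot_lt_le; intros Hl.
 destruct (Hd (- l) ltac:(lra)) as [d Hdd].
 set (h := Rmin (d / 2) ((1 - x) / 2)).
 assert (hpos : 0 < h) by (apply Rmin_pos; [pose proof (cond_pos d)|]; lra).
 assert (h1 : h <= d / 2) by apply Rmin_l. assert (h2 : h <= (1 - x) / 2) by apply Rmin_r.
 specialize (Hdd h ltac:(lra)). rewrite Rabs_pos_eq in Hdd by lra. specialize (Hdd ltac:(pose proof (cond_pos d); lra)).
 assert (g x < g (x + h)) by (apply Hinc; unfold inI; lra).
 assert (0 < (g (x + h) - g x) / h) by (apply Rdiv_lt_0_compat; lra).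
 pose proof (Rle_abs ((g (x + h) - g x) / h - l)). lra. Qed.

Lemma gm_DF (N : nat) (f : nat -> R -> R) : (forall k, (k < N)%nat -> good_map (f k)) ->
  exists DF : nat -> R -> R, forall k, (k < N)%nat ->
    (forall x, inI x -> derivable_pt_lim (f k) x (DF k x)) /\ (forall x, inI x -> DF k x <> 0) /\
    (forall x, inI x -> forall eps, 0 < eps -> exists delta, 0 < delta /\
        forall y, inI y -> Rabs (y - x) < delta -> Rabs (DF k y - DF k x) < eps).
Proof. intros H. apply (choice_nat (T := R -> R) (fun _ => 0) N (fun k DF => (forall x, inI x -> derivable_pt_lim (f k) x (DF x)) /\ (forall x, inI x -> DF x <> 0) /\ (forall x, inI x -> forall eps, 0 < eps -> exists delta, 0 < delta /\ forall y, inI y -> Rabs (y - x) < delta -> Rabs (DF y - DF x) < eps))). intros k Hk. destruct (H k Hk) as [_ [_ [df [h1 [h2 h3]]]]].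
 exists df; auto. Qed.

Lemma nsum_pos n g : (0 < nsum n g)%nat -> exists l, (l < n)%nat /\ (0 < g l)%nat.
Proof. induction n; simpl; intros H. lia. destruct (Nat.eq_dec (g n) 0).
 destruct IHn as [l [h1 h2]]. lia. exists l; split; auto. exists n; split; lia. Qed.

Lemma mpow_pred N A (Z : nat -> Prop) :
  (forall l j, (l < N)%nat -> (j < N)%nat -> (0 < A l j)%nat -> Z j -> Z l) ->
  forall n i j, (i < N)%nat -> (j < N)%nat -> (0 < mpow N A n i j)%nat -> Z j -> Z i.
Proof. intros HZ n. induction n; intros i j hi hj hp hz; simpl in hp.
 destruct (Nat.eqb_spec i j). subst; auto. lia.
 destruct (nsum_pos _ _ hp) as [l [hl hl2]]. apply (IHn i l); auto. lia. apply (HZ l j); auto; lia. Qed.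

Lemma mpow_succ N A (Z : nat -> Prop) :
  (forall l j, (l < N)%nat -> (j < N)%nat -> (0 < A l j)%nat -> Z l -> Z j) ->
  forall n i j, (i < N)%nat -> (j < N)%nat -> (0 < mpow N A n i j)%nat -> Z i -> Z j.
Proof. intros HZ n. induction n; intros i j hi hj hp hz; simpl in hp.
 destruct (Nat.eqb_spec i j). subst; auto. lia.
 destruct (nsum_pos _ _ hp) as [l [hl hl2]]. apply (HZ l j); auto; try lia. apply (IHn i l); auto. lia. Qed.

Lemma adm_A N A P l j : compatible N A P -> (l < N)%nat -> (j < N)%nat -> (0 < A l j)%nat -> zero_one_matrix N A -> admissible P l j.
Proof. intros Hc hl hj hA H01. unfold admissible. apply Hc; auto. destruct (H01 l j hl hj); lia. Qed.

Lemma irred_pred N A P (Z : nat -> Prop) : zero_one_matrix N A -> has_positive_power N A -> compatible N A P ->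
  (forall l j, (l < N)%nat -> (j < N)%nat -> admissible P l j -> Z j -> Z l) ->
  forall i j, (i < N)%nat -> (j < N)%nat -> Z j -> Z i.
Proof. intros H01 [n [_ Hn]] Hc HZ i j hi hj hz. apply (mpow_pred N A Z) with n j; auto.
 intros l j' hl hj' hA. apply HZ; auto. eapply adm_A; eauto. Qed.

Lemma irred_succ N A P (Z : nat -> Prop) : zero_one_matrix N A -> has_positive_power N A -> compatible N A P ->
  (forall l j, (l < N)%nat -> (j < N)%nat -> admissible P l j -> Z l -> Z j) ->
  forall i j, (i < N)%nat -> (j < N)%nat -> Z i -> Z j.
Proof. intros H01 [n [_ Hn]] Hc HZ i j hi hj hz. apply (mpow_succ N A Z) with n i; auto.
 intros l j' hl hj' hA. apply HZ; auto. eapply adm_A; eauto. Qed.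

Lemma P_nonadm N P i j : stochastic N P -> (i < N)%nat -> (j < N)%nat -> ~ admissible P i j -> P i j = 0.
Proof. intros [H _] hi hj hn. unfold admissible in hn. specialize (H i j hi hj). lra. Qed.

Lemma null_ray_supp m c a : finite_measure m -> m (fun x => x < c) = 0 -> supp m a -> c <= a.
Proof. intros Hm H0 Hs. apply Rnot_lt_le; intros h. specialize (Hs (c - a) ltac:(lra)).
 assert (m (fun y => a - (c - a) < y < a + (c - a)) <= m (fun x => x < c)).
 apply meas_mono; auto. apply borel_open. apply borel_lt. intros; lra. lra. Qed.

Lemma lower_endpoint m : finite_measure m -> m (fun x => ~ inI x) = 0 -> 0 < m (fun _ => True) ->
  exists a, 0 <= a <= 1 /\ supp m a /\ (forall x, supp m x -> a <= x) /\ m (fun x => x < a) = 0.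
Proof. intros Hm Hn Hp.
 set (S := fun t => m (fun x => x < t) = 0).
 assert (Hdown : forall t s, S t -> s <= t -> S s).
 { unfold S; intros t s ht hs. apply meas_null_sub with (fun x => x < t); auto; try apply borel_lt. intros; lra. }
 assert (S0 : S 0). { unfold S. apply meas_null_sub with (fun x => ~ inI x); auto. apply borel_lt. apply borel_compl, borel_inI.
   unfold inI; intros; lra. }
 assert (Sb : forall t, S t -> t <= 1).
 { intros t ht. apply Rnot_lt_le; intros h. unfold S in ht.
   assert (m (fun _ => True) <= m (fun x => x < t)).
   { rewrite (meas_restrict m (fun _ => True)); auto. apply meas_mono; auto. apply borel_inter. apply borel_inI. apply borel_True.
     apply borel_lt. unfold inI; intros x [hx _]; lra. apply borel_True. }
   lra. }
 destruct (completeness S) as [a [Ha1 Ha2]]. exists 1. intros t ht; apply Sb; auto. exists 0; auto.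
 assert (Ha0 : 0 <= a) by (apply Ha1; auto). assert (Ha1' : a <= 1) by (apply Ha2; intros t ht; apply Sb; auto).
 assert (Hnull : S a).
 { unfold S. replace (fun x => x < a) with (fun x => exists n, (fun n x => x < a - / (INR n + 1)) n x).
   apply meas_null_union; auto. intros; apply borel_lt.
   intros n. assert (Hpos : 0 < / (INR n + 1)) by (apply Rinv_0_lt_compat; pose proof (pos_INR n); lra).
   destruct (classic (exists t, S t /\ a - / (INR n + 1) < t)) as [[t [ht1 ht2]]|hn].
   apply (Hdown t); auto. lra.
   assert (a <= a - / (INR n + 1)). apply Ha2. intros t ht. apply Rnot_lt_le; intros h; apply hn; eauto. lra.
   apply set_ext. intros x; split. intros [n h]; cbv beta in h. assert (0 < / (INR n + 1)) by (apply Rinv_0_lt_compat; pose proof (pos_INR n); lra). lra.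
   intros h. destruct (archimed (/ (a - x))) as [h1 _].
   assert (0 < / (a - x)) by (apply Rinv_0_lt_compat; lra).
   assert (0 <= IZR (up (/ (a - x)))) by lra.
   exists (Z.to_nat (up (/ (a - x)))). rewrite INR_IZR_INZ, Z2Nat.id by (apply le_IZR; lra).
   assert (/ (IZR (up (/ (a - x))) + 1) < a - x).
   { set (u := IZR (up (/ (a - x)))). apply Rlt_le_trans with (/ / (a - x)); [|rewrite Rinv_inv; lra].
     apply Rinv_lt_contravar. apply Rmult_lt_0_compat; unfold u; lra. unfold u; lra. }
   lra. }
 exists a. split; [lra|]. split; [|split; auto].
 - intros d hd. apply Rnot_le_lt; intros h.
   assert (S (a + d)). { unfold S. apply Rle_antisym.
     replace (fun x => x < a + d) with (fun x => x < a \/ (a <= x /\ x < a + d)).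
     rewrite meas_add; auto. unfold S in Hnull.
     assert (m (fun x => a <= x /\ x < a + d) <= m (fun y => a - d < y < a + d)).
     apply meas_mono; auto. apply borel_inter; [apply borel_ge|apply borel_lt]. apply borel_open. intros; lra.
     lra. apply borel_lt. apply borel_inter; [apply borel_ge|apply borel_lt]. intros; lra.
     apply set_ext; intros x; lra.
     apply meas_nonneg; auto; apply borel_lt. }
   assert (a + d <= a) by (apply Ha1; auto). lra.
 - intros x hx. apply (null_ray_supp m a x); auto.
Qed.

Definition Hyp N A P f mu : Prop :=
  (1 <= N)%nat /\ zero_one_matrix N A /\ has_positive_power N A /\ stochastic N P /\ compatible N A P /\
  (forall k, (k < N)%nat -> good_map (f k)) /\ G1 N P f /\ G2 N P f /\ G3 N P f /\ stationary N P f mu.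

Lemma stat_meas N P f mu k : stationary N P f mu -> (k < N)%nat -> finite_measure (mu k) /\ mu k (fun x => ~ inI x) = 0.
Proof. intros [[H _] _] hk. apply H; auto. Qed.

Lemma Rsum_pos_ex n g : (forall i, (i < n)%nat -> 0 <= g i) -> 0 < Rsum n g -> exists i, (i < n)%nat /\ 0 < g i.
Proof. intros H Hp. apply NNPP; intros hn. assert (Rsum n g <= Rsum n (fun _ => 0)).
 apply Rsum_le. intros i hi. apply Rnot_lt_le. intros h. apply hn; eauto. rewrite Rsum_zero in H0. lra. Qed.

Lemma Rsum_zero_each n g : (forall i, (i < n)%nat -> 0 <= g i) -> Rsum n g = 0 -> forall i, (i < n)%nat -> g i = 0.
Proof. intros H H0 i hi. pose proof (Rsum_term_le n g i H hi). pose proof (H i hi). lra. Qed.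

Lemma stat_term_nonneg N A P f mu j S i : Hyp N A P f mu -> (j < N)%nat -> (i < N)%nat -> convex S ->
  0 <= P i j * mu i (fun x => inI x /\ S (f i x)).
Proof. intros (hN & h01 & hpr & hP & hc & hf & _ & _ & _ & hst) hj hi hA.
 apply Rmult_le_pos. apply hP; auto. apply meas_nonneg. apply (stat_meas N P f mu i); auto. apply gm_pre_borel; auto. Qed.

Lemma mass_pos N A P f mu k : Hyp N A P f mu -> (k < N)%nat -> 0 < mu k (fun _ => True).
Proof. intros HH hk. pose proof HH as (hN & h01 & hpr & hP & hc & hf & _ & _ & _ & hst).
 assert (Hm : forall k, (k < N)%nat -> finite_measure (mu k) /\ mu k (fun x => ~ inI x) = 0) by (intros; eapply stat_meas; eauto).
 assert (E : forall i, (i < N)%nat -> mu i (fun x => inI x /\ (fun _ => True) (f i x)) = mu i (fun _ => True)).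
 { intros i hi. destruct (Hm i hi). symmetry. apply meas_restrict; auto. apply borel_True. }
 assert (Hs : forall j, (j < N)%nat -> mu j (fun _ => True) = Rsum N (fun i => P i j * mu i (fun _ => True))).
 { intros j hj. destruct hst as [_ hst]. rewrite (hst j (fun _ => True) hj borel_True). apply Rsum_ext. intros i hi. rewrite E; auto. }
 assert (Hnn : forall i, (i < N)%nat -> 0 <= mu i (fun _ => True)). { intros i hi; destruct (Hm i hi); apply meas_nonneg; auto; apply borel_True. }
 destruct (Rle_lt_or_eq_dec 0 _ (Hnn k hk)) as [h|h]; auto. exfalso.
 assert (Hall : forall i, (i < N)%nat -> mu i (fun _ => True) = 0).
 { intros i hi. apply (irred_pred N A P (fun j => mu j (fun _ => True) = 0)) with k; auto.
   intros l j hl hj hadm hz. rewrite Hs in hz by auto.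
   assert (Z := Rsum_zero_each N _ (fun i hi => Rmult_le_pos _ _ (proj1 hP i j hi hj) (Hnn i hi)) hz l hl).
   unfold admissible in hadm. apply Rmult_integral in Z. destruct Z; auto. lra. }
 destruct hst as [[_ hsum] _]. rewrite (Rsum_ext N _ (fun _ => 0)) in hsum by auto. rewrite Rsum_zero in hsum. lra. Qed.

Definition LE (mu : nat -> (R -> Prop) -> R) (a : nat -> R) k : Prop :=
  0 < a k /\ a k < 1 /\ supp (mu k) (a k) /\ (forall x, supp (mu k) x -> a k <= x) /\ mu k (fun x => x < a k) = 0.

Lemma adm_ge_gen N A P f mu a i k : Hyp N A P f mu -> (i < N)%nat -> (k < N)%nat -> admissible P i k ->
  0 <= a i <= 1 -> supp (mu i) (a i) -> (forall x, supp (mu k) x -> a k <= x) -> a k <= f i (a i).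
Proof. intros HH hi hk hadm hai hsi hmin. pose proof HH as (hN & h01 & hpr & hP & hc & hf & _ & _ & _ & hst).
 apply hmin. intros d hd. set (y0 := f i (a i)).
 destruct (stat_meas N P f mu i hst hi) as [Hmi Hni].
 destruct (hf i hi) as [_ [_ [df [hd1 _]]]].
 destruct (deriv_cont _ _ _ (hd1 (a i) hai) d hd) as [eta [heta Heta]].
 destruct hst as [hpu hst]. rewrite hst; auto; [|apply borel_open].
 apply Rlt_le_trans with (P i k * mu i (fun x => inI x /\ y0 - d < f i x < y0 + d)).
 2:{ apply (Rsum_term_le N (fun i0 => P i0 k * mu i0 (fun x => inI x /\ y0 - d < f i0 x < y0 + d))); auto.
     intros i0 hi0. apply (stat_term_nonneg N A P f mu k (fun z => y0 - d < z < y0 + d) i0); auto. apply convex_open. }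
 apply Rmult_lt_0_compat; auto.
 apply Rlt_le_trans with (mu i (fun x => a i - eta < x < a i + eta)). apply hsi; auto.
 rewrite (meas_restrict (mu i) (fun x => a i - eta < x < a i + eta)); auto; [|apply borel_open].
 apply meas_mono; auto. apply borel_inter; [apply borel_inI|apply borel_open].
 apply (gm_pre_borel (f i) (fun z => y0 - d < z < y0 + d)); auto. apply convex_open.
 intros x [hx1 hx2]. split; auto. assert (Rabs (x - a i) < eta) by (apply Rabs_def1; lra).
 specialize (Heta x H). apply Rabs_def2 in Heta. unfold y0; lra. Qed.

Lemma endpoints N A P f mu : Hyp N A P f mu -> exists a, forall k, (k < N)%nat -> LE mu a k.
Proof. intros HH. pose proof HH as (hN & h01 & hpr & hP & hc & hf & _ & _ & _ & hst).
 destruct (choice_nat 0 N (fun k a => 0 <= a <= 1 /\ supp (mu k) a /\ (forall x, supp (mu k) x -> a <= x) /\ mu k (fun x => x < a) = 0)) as [a Ha].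
 { intros k hk. destruct (stat_meas N P f mu k hst hk). apply lower_endpoint; auto. eapply mass_pos; eauto. }
 exists a. intros k hk. destruct (Ha k hk) as [h1 [h2 [h3 h4]]].
 destruct (stat_meas N P f mu k hst hk) as [Hmk Hnk].
 split; [|split]; auto.
 - destruct (fin_min_pos N (fun i => f i 0)) as [c [hc0 hc1]].
   { intros i hi. destruct (hf i hi) as [h _]. apply h. unfold inI; lra. }
   apply Rlt_le_trans with c; auto. apply (null_ray_supp (mu k)); auto.
   destruct hst as [hpu hst']. rewrite hst'; auto; [|apply borel_lt].
   rewrite (Rsum_ext N _ (fun _ => 0)). apply Rsum_zero. intros i hi.
   replace (fun x => inI x /\ f i x < c) with (fun _ : R => False). rewrite (proj1 (proj1 (stat_meas N P f mu i (conj hpu hst') hi))). ring.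
   apply set_ext. intros x; split; [tauto|]. intros [hx hx2]. specialize (hc1 i hi).
   assert (f i 0 <= f i x). apply gm_mono; auto. unfold inI; lra. unfold inI in hx; lra. lra.
 - assert (Hp := mass_pos N A P f mu k HH hk).
   destruct hst as [hpu hst']. rewrite hst' in Hp; auto; [|apply borel_True].
   destruct (Rsum_pos_ex N _ (fun i hi => stat_term_nonneg N A P f mu k (fun _ => True) i HH hk hi convex_True) Hp) as [i [hi hpi]].
   assert (hadm : admissible P i k). { unfold admissible. destruct (Rle_lt_or_eq_dec 0 (P i k) (proj1 hP i k hi hk)) as [e|e]; auto.
     rewrite <- e in hpi. lra. }
   destruct (Ha i hi) as [g1 [g2 [g3 g4]]].
   pose proof (adm_ge_gen N A P f mu a i k HH hi hk hadm g1 g2 h3).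
   destruct (hf i hi) as [hfi _]. specialize (hfi (a i) g1). lra.
Qed.

Lemma adm_ge N A P f mu a i k : Hyp N A P f mu -> (forall k, (k < N)%nat -> LE mu a k) -> (i < N)%nat -> (k < N)%nat -> admissible P i k ->
  a k <= f i (a i).
Proof. intros HH Ha hi hk hadm. destruct (Ha i hi) as [g1 [g2 [g3 [g4 g5]]]]. destruct (Ha k hk) as [k1 [k2 [k3 [k4 k5]]]].
 eapply adm_ge_gen; eauto. lra. Qed.

Fixpoint chain (E : nat -> nat -> Prop) (l : list nat) : Prop :=
  match l with
  | x :: ((y :: _) as r) => E x y /\ chain E r
  | _ => True
  end.

Fixpoint Pr (c : nat -> R) (l : list nat) : R :=
  match l with [] => 1 | x :: r => c x * Pr c r end.

Definition cyc (E : nat -> nat -> Prop) (l : list nat) : Prop :=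
  l <> [] /\ NoDup l /\ chain E (l ++ [hd 0%nat l]).

Lemma chain_cons2 E x y r : chain E (x :: y :: r) <-> E x y /\ chain E (y :: r).
Proof. reflexivity. Qed.
Lemma chain_app_cons E l1 x l2 : chain E (l1 ++ x :: l2) <-> chain E (l1 ++ [x]) /\ chain E (x :: l2).
Proof. induction l1 as [|a l1 IH]. simpl. split; [intros h; split; auto|intros [_ h]; auto].
 destruct l1 as [|b l1]. cbn [app]. rewrite !chain_cons2. simpl. split; [intros [h1 h2]; auto|intros [[h1 _] h2]; auto].
 cbn [app]. rewrite !chain_cons2. change (chain E (b :: l1 ++ x :: l2)) with (chain E ((b :: l1) ++ x :: l2)).
 change (chain E (b :: l1 ++ [x])) with (chain E ((b :: l1) ++ [x])). rewrite IH.
 split; [intros [h1 [h2 h3]]; auto|intros [[h1 h2] h3]; auto]. Qed.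
Lemma chain_snoc E l y : l <> [] -> (chain E (l ++ [y]) <-> chain E l /\ E (last l 0%nat) y).
Proof. intros Hl. rewrite (app_removelast_last 0%nat Hl) at 1. rewrite <- app_assoc. simpl app.
 rewrite chain_app_cons. rewrite <- (app_removelast_last 0%nat Hl). cbn [chain]. split; intros [h1 h2]; try destruct h2; auto. Qed.

Lemma Pr_app c l1 l2 : Pr c (l1 ++ l2) = Pr c l1 * Pr c l2.
Proof. induction l1; simpl; [ring|rewrite IHl1; ring]. Qed.

Lemma Pr_pos c l : (forall x, In x l -> 0 < c x) -> 0 < Pr c l.
Proof. induction l; simpl; intros H. lra. apply Rmult_lt_0_compat; auto. Qed.

Lemma Pr_scal c t l : Pr (fun i => t * c i) l = t ^ length l * Pr c l.
Proof. induction l; simpl; [ring|rewrite IHl; ring]. Qed.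

Lemma chain_src E q j x : chain E (q ++ [j]) -> In x q -> exists y, E x y.
Proof. revert x. induction q as [|a q IH]; intros x H Hx. destruct Hx.
 destruct q as [|b q]. destruct Hx as [<-|[]]. simpl in H. destruct H; eauto.
 cbn [app] in H. apply chain_cons2 in H. destruct H as [h1 h2]. destruct Hx as [<-|Hx]. eauto. apply IH; auto. Qed.

Lemma last_app_cons (l1 l2 : list nat) x d : last (l1 ++ x :: l2) d = last (x :: l2) d.
Proof. induction l1 as [|a l1 IH]; simpl; auto. rewrite IH. destruct l1; simpl; auto. Qed.

Fixpoint enum (N n : nat) : list (list nat) :=
  match n with
  | O => [[]]
  | S n => [] :: flat_map (fun x => map (cons x) (enum N n)) (seq 0 N)
  end.

Lemma enum_in N n l : (length l <= n)%nat -> (forall x, In x l -> (x < N)%nat) -> In l (enum N n).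
Proof. revert l; induction n; intros l hl hx. destruct l; simpl in *; [auto|lia].
 destruct l as [|a l]; simpl. auto. right. apply in_flat_map. exists a. split. apply in_seq. specialize (hx a (or_introl eq_refl)). lia.
 apply in_map. apply IHn. simpl in hl; lia. intros; apply hx; simpl; auto. Qed.

Lemma nodup_len N l : NoDup l -> (forall x, In x l -> (x < N)%nat) -> (length l <= N)%nat.
Proof. intros H hx. replace N with (length (seq 0 N)) by apply length_seq. apply NoDup_incl_length; auto.
 intros x h. apply in_seq. specialize (hx x h). lia. Qed.

Lemma list_max (L : list (list nat)) (Q : list nat -> Prop) (g : list nat -> R) :
  (exists p, In p L /\ Q p) -> exists p, In p L /\ Q p /\ forall q, In q L -> Q q -> g q <= g p.
Proof. induction L as [|a L IH]; intros [p [hp hq]]. destruct hp.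
 destruct (classic (exists p, In p L /\ Q p)) as [h|h].
 - destruct (IH h) as [p' [h1 [h2 h3]]]. destruct (classic (Q a /\ g p' < g a)) as [[ha1 ha2]|ha].
   + exists a. split; [left; auto|split; auto]. intros q [<-|hq'] hqq. lra. specialize (h3 q hq' hqq). lra.
   + exists p'. split; [right; auto|split; auto]. intros q [<-|hq'] hqq; auto. apply Rnot_lt_le. intros hl; apply ha; auto.
 - destruct hp as [<-|hp]. 2:{ exfalso; apply h; eauto. }
   exists a. split; [left; auto|split; auto]. intros q [<-|hq'] hqq. lra. exfalso; apply h; eauto. Qed.

Lemma fin_max N (Q : list nat -> Prop) (g : list nat -> R) :
  (forall q, Q q -> NoDup q /\ forall x, In x q -> (x < N)%nat) -> (exists q, Q q) ->
  exists p, Q p /\ forall q, Q q -> g q <= g p.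
Proof. intros H [q0 hq0]. destruct (list_max (enum N N) Q g) as [p [_ [h1 h2]]].
 exists q0. split; auto. destruct (H q0 hq0). apply enum_in; auto. apply nodup_len; auto.
 exists p; split; auto. intros q hq. apply h2; auto. destruct (H q hq). apply enum_in; auto. apply nodup_len; auto. Qed.

Lemma cyc_bound N E l : (forall i j, E i j -> (i < N)%nat /\ (j < N)%nat) -> cyc E l -> forall x, In x l -> (x < N)%nat.
Proof. intros HE [_ [_ hc]] x hx. destruct (chain_src E l _ x hc hx) as [y hy]. apply HE in hy. tauto. Qed.

Lemma potential N E c : (forall i j, E i j -> (i < N)%nat /\ (j < N)%nat) -> (forall i, (i < N)%nat -> 0 < c i) ->
  (forall l, cyc E l -> Pr c l < 1) ->
  exists phi : nat -> R, (forall j, (j < N)%nat -> 1 <= phi j) /\ forall i j, E i j -> c i * phi i <= phi j.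
Proof. intros HE Hc Hcyc.
 set (Q := fun j q => NoDup (q ++ [j]) /\ chain E (q ++ [j])).
 assert (HQ : forall j q, Q j q -> NoDup q /\ forall x, In x q -> (x < N)%nat).
 { intros j q [h1 h2]. split. eapply NoDup_app_remove_r; eauto. intros x hx. destruct (chain_src E q j x h2 hx) as [y hy]. apply HE in hy; tauto. }
 destruct (choice_nat (@nil nat) N (fun j p => Q j p /\ forall q, Q j q -> Pr c q <= Pr c p)) as [best Hb].
 { intros j hj. apply (fin_max N (Q j) (Pr c)). apply HQ. exists []. split; simpl; auto. constructor; auto; constructor. }
 exists (fun j => Pr c (best j)). split.
 - intros j hj. destruct (Hb j hj) as [_ h]. apply (h []). split; simpl; auto. constructor; auto; constructor.
 - intros i j hij. destruct (HE i j hij) as [hi hj]. destruct (Hb i hi) as [[hq1 hq2] _]. destruct (Hb j hj) as [_ hbj].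
   set (q := best i) in *. set (l := q ++ [i]).
   assert (Hl : Pr c l = Pr c q * c i) by (unfold l; rewrite Pr_app; simpl; ring).
   assert (Hpos : forall x, In x l -> 0 < c x).
   { intros x hx. unfold l in hx. apply in_app_or in hx. destruct hx as [hx|[<-|[]]]; auto. apply Hc. apply (HQ i q); auto. split; auto. }
   destruct (classic (In j l)) as [hin|hnin].
   + destruct (in_split _ _ hin) as [l1 [l2 hl]].
     assert (Hcy : cyc E (j :: l2)).
     { split. discriminate. split. fold l in hq1. rewrite hl in hq1. apply NoDup_app_remove_l in hq1. auto.
       simpl hd. rewrite chain_snoc by discriminate. fold l in hq2. rewrite hl in hq2. apply chain_app_cons in hq2.
       split. tauto. replace (last (j :: l2) 0%nat) with i; auto. rewrite <- last_app_cons with (l1 := l1). rewrite <- hl. unfold l. rewrite last_last. auto. }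
     assert (HQ1 : Q j l1).
     { fold l in hq1, hq2. rewrite hl in hq1, hq2. split. replace (l1 ++ j :: l2) with ((l1 ++ [j]) ++ l2) in hq1 by (rewrite <- app_assoc; auto).
       eapply NoDup_app_remove_r; eauto. apply chain_app_cons in hq2; tauto. }
     specialize (hbj l1 HQ1). specialize (Hcyc _ Hcy).
     assert (Pr c l = Pr c l1 * Pr c (j :: l2)) by (rewrite hl, Pr_app; auto).
     assert (0 < Pr c l1). { apply Pr_pos. intros x hx. apply Hpos. rewrite hl. apply in_or_app; auto. }
     assert (c i * Pr c q = Pr c l1 * Pr c (j :: l2)) by lra.
     assert (Pr c l1 * Pr c (j :: l2) <= Pr c l1 * 1). apply Rmult_le_compat_l; lra. lra.
   + assert (HQ2 : Q j l).
     { split. apply NoDup_app; auto. constructor; auto; constructor. intros a ha [<-|[]]; auto.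
       unfold l. rewrite chain_snoc by (destruct q; discriminate). split; auto. rewrite last_last; auto. }
     specialize (hbj l HQ2). lra. Qed.

Lemma cycle_margin N E c : (forall i j, E i j -> (i < N)%nat /\ (j < N)%nat) -> (forall i, (i < N)%nat -> 0 < c i) ->
  (forall l, cyc E l -> Pr c l < 1) ->
  exists t, 1 < t /\ forall l, cyc E l -> Pr (fun i => t * c i) l < 1.
Proof. intros HE Hc Hcyc.
 destruct (classic (exists l, cyc E l)) as [hex|hno].
 2:{ exists 2. split. lra. intros l hl; exfalso; eauto. }
 destruct (fin_max N (cyc E) (Pr c)) as [l0 [hl0 hmax]]; auto.
 { intros q hq. split. apply hq. eapply cyc_bound; eauto. }
 set (G := Pr c l0).
 assert (HG0 : 0 < G). { apply Pr_pos. intros x hx. apply Hc. eapply cyc_bound; eauto. }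
 assert (HG1 : G < 1) by (apply Hcyc; auto).
 assert (HN : (1 <= N)%nat). { destruct l0 as [|x l0']. destruct hl0; congruence. assert (x < N)%nat by (eapply cyc_bound; eauto; left; auto). lia. }
 set (b := 2 / (1 + G)).
 assert (Hb : 1 < b) by (unfold b; apply Rlt_gt; apply (Rmult_lt_reg_r (1 + G)); [lra|]; unfold Rdiv; rewrite Rmult_assoc, Rinv_l; lra).
 set (t := Rpower b (/ INR N)).
 assert (HN' : 0 < INR N) by (apply lt_0_INR; lia).
 assert (Ht0 : 0 < t) by (unfold t, Rpower; apply exp_pos).
 assert (HtN : t ^ N = b).
 { rewrite <- Rpower_pow by auto. unfold t. rewrite Rpower_mult. rewrite Rinv_l by lra. apply Rpower_1; lra. }
 assert (Ht1 : 1 < t).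
 { apply Rnot_le_lt; intros h. assert (t ^ N <= 1 ^ N). { apply pow_incr; lra. } rewrite pow1 in H. lra. }
 exists t. split; auto. intros l hl. rewrite Pr_scal.
 assert (hlen : (length l <= N)%nat) by (apply nodup_len; [apply hl|eapply cyc_bound; eauto]).
 assert (t ^ length l <= t ^ N) by (apply Rle_pow; [lra|auto]).
 assert (Pr c l <= G) by (apply hmax; auto).
 assert (0 < Pr c l) by (apply Pr_pos; intros x hx; apply Hc; eapply cyc_bound; eauto).
 assert (t ^ length l * Pr c l <= b * G). { rewrite <- HtN. apply Rmult_le_compat; try lra. apply pow_le; lra. }
 assert (b * G < 1). { unfold b. apply (Rmult_lt_reg_r (1 + G)); [lra|]. unfold Rdiv. replace (2 * / (1 + G) * G * (1 + G)) with (2 * G * (/ (1 + G) * (1 + G))) by ring. rewrite Rinv_l; lra. }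
 lra. Qed.

Lemma loop_remove E x p : chain E (x :: p) ->
  exists q, chain E (x :: q) /\ NoDup (x :: q) /\ last (x :: q) 0%nat = last (x :: p) 0%nat.
Proof. revert x. induction p as [|y p IH]; intros x H.
 exists []. split; auto. split; auto. constructor; auto; constructor.
 apply chain_cons2 in H. destruct H as [h1 h2]. destruct (IH y h2) as [q' [c1 [c2 c3]]].
 destruct (classic (In x (y :: q'))) as [hin|hnin].
 - destruct (in_split _ _ hin) as [l1 [l2 hl]]. exists l2. rewrite hl in c1, c2, c3.
   split. apply chain_app_cons in c1; tauto. split. eapply NoDup_app_remove_l; eauto.
   rewrite last_app_cons in c3. rewrite c3. reflexivity.
 - exists (y :: q'). split. apply chain_cons2; auto. split. constructor; auto.
   change (last (y :: q') 0%nat = last (y :: p) 0%nat). auto. Qed.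

Lemma Pr_perm c l l' : Permutation l l' -> Pr c l = Pr c l'.
Proof. induction 1; simpl; auto. rewrite IHPermutation; auto. ring. congruence. Qed.

Lemma cyc_rot E l u : cyc E l -> In u l -> exists l', cyc E (u :: l') /\ Permutation l (u :: l').
Proof. intros [hne [hnd hch]] hu. destruct (in_split _ _ hu) as [l1 [l2 hl]]. subst l.
 assert (Hp : Permutation (l1 ++ u :: l2) (u :: l2 ++ l1)).
 { eapply perm_trans. apply Permutation_sym, Permutation_middle. apply perm_skip. apply Permutation_app_comm. }
 exists (l2 ++ l1). split; auto. split. discriminate. split. eapply Permutation_NoDup; eauto.
 destruct l1 as [|h t]. simpl in *. rewrite app_nil_r. auto.
 simpl hd in *. rewrite <- app_assoc in hch. simpl app in hch at 2.
 apply (chain_app_cons E (h :: t) u (l2 ++ [h])) in hch. destruct hch as [c1 c2].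
 replace ((u :: l2 ++ h :: t) ++ [u]) with ((u :: l2) ++ h :: (t ++ [u])) by (simpl; rewrite <- app_assoc; auto).
 apply chain_app_cons. split. auto. auto. Qed.

Definition T (N : nat) (P : nat -> nat -> R) (f : nat -> R -> R) (a : nat -> R) (i j : nat) : Prop :=
  (i < N)%nat /\ (j < N)%nat /\ admissible P i j /\ f i (a i) = a j.

Lemma chain_adm N P f a l : chain (T N P f a) l -> (forall x, In x l -> (x < N)%nat) -> adm_chain N P l.
Proof. induction l as [|x l IH]; intros H Hb; simpl; auto. split. apply Hb; left; auto.
 destruct l as [|y l]; auto. apply chain_cons2 in H. destruct H as [[_ [_ [h _]]] h2]. split; auto.
 apply IH; auto. intros z hz; apply Hb; right; auto. Qed.

Lemma chain_bound N P f a x l : (x < N)%nat -> chain (T N P f a) (x :: l) -> forall z, In z (x :: l) -> (z < N)%nat.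
Proof. revert x. induction l as [|y l IH]; intros x hx H z hz. destruct hz as [<-|[]]; auto.
 apply chain_cons2 in H. destruct H as [[_ [hy _]] h2]. destruct hz as [<-|hz]; auto. apply (IH y); auto. Qed.

Lemma comp_chain N P f a (d : nat -> R) q j : (forall k, (k < N)%nat -> derivable_pt_lim (f k) (a k) (d k)) ->
  q <> [] -> chain (T N P f a) (q ++ [j]) ->
  Defs.comp f (q ++ [j]) (a (hd 0%nat q)) = a j /\ derivable_pt_lim (Defs.comp f (q ++ [j])) (a (hd 0%nat q)) (Pr d q).
Proof. intros Hd. induction q as [|x q IH]; intros Hne H. congruence.
 destruct q as [|y q].
 - simpl in H. destruct H as [[hx [hj [_ he]]] _]. simpl. split; auto. rewrite Rmult_1_r. apply Hd; auto.
 - cbn [app] in H. apply chain_cons2 in H. destruct H as [[hx [hy [_ he]]] h2].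
   destruct (IH ltac:(discriminate) h2) as [e1 e2]. simpl hd in *.
   change (Defs.comp f ((x :: y :: q) ++ [j])) with (fun z => Defs.comp f ((y :: q) ++ [j]) (f x z)).
   split. cbv beta. rewrite he; auto.
   replace (Pr d (x :: y :: q)) with (Pr d (y :: q) * d x) by (simpl; ring).
   apply (derivable_pt_lim_comp (f x) (Defs.comp f ((y :: q) ++ [j]))). apply Hd; auto. rewrite he; auto. Qed.

Lemma cyc_simple_return N P f a c : cyc (T N P f a) c -> simple_return N P (c ++ [hd 0%nat c]).
Proof. intros [hne [hnd hch]]. destruct c as [|k w']. congruence. split. split. simpl. rewrite length_app. simpl. lia.
 apply chain_adm with f a; auto. intros x hx. apply (cyc_bound N (T N P f a) (k :: w')); auto.
 intros i j [h1 [h2 _]]; auto. split; auto. apply in_app_or in hx. destruct hx as [hx|[<-|[]]]; auto. left; auto.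
 exists k, w'. split; auto. Qed.

Lemma T_bound N P f a : forall i j, T N P f a i j -> (i < N)%nat /\ (j < N)%nat.
Proof. intros i j [h1 [h2 _]]; auto. Qed.

Lemma cyc_fix N P f a d c : (forall k, (k < N)%nat -> derivable_pt_lim (f k) (a k) (d k)) -> cyc (T N P f a) c ->
  Defs.comp f (c ++ [hd 0%nat c]) (a (hd 0%nat c)) = a (hd 0%nat c) /\
  derivable_pt_lim (Defs.comp f (c ++ [hd 0%nat c])) (a (hd 0%nat c)) (Pr d c).
Proof. intros Hd [hne [hnd hch]]. apply (comp_chain N P f a d c (hd 0%nat c)); auto. Qed.

Lemma cyc_ne1 N P f a d c : G1 N P f -> (forall k, (k < N)%nat -> derivable_pt_lim (f k) (a k) (d k)) ->
  (forall k, (k < N)%nat -> inI (a k)) -> cyc (T N P f a) c -> Pr d c <> 1.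
Proof. intros HG1 Hd Ha Hc. destruct (cyc_fix N P f a d c Hd Hc) as [e1 e2].
 apply (HG1 (c ++ [hd 0%nat c]) (a (hd 0%nat c))); auto. apply (cyc_simple_return N P f a); auto.
 split; auto. apply Ha. pose proof Hc as [hne _]. destruct c as [|k c]. congruence.
 apply (cyc_bound N (T N P f a) (k :: c)). apply T_bound. auto. left; auto. Qed.

Definition DH N (f : nat -> R -> R) (a d : nat -> R) : Prop :=
  forall k, (k < N)%nat -> derivable_pt_lim (f k) (a k) (d k) /\ inI (a k) /\ 0 < d k.

Lemma cyc_head_bound N P f a u x' : cyc (T N P f a) (u :: x') -> (u < N)%nat.
Proof. intros H. apply (cyc_bound N (T N P f a) (u :: x')). apply T_bound. auto. left; auto. Qed.

Lemma cyc_Pr_pos N P f a d c : DH N f a d -> cyc (T N P f a) c -> 0 < Pr d c.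
Proof. intros HD Hc. apply Pr_pos. intros x hx. apply HD. eapply cyc_bound; eauto. apply T_bound. Qed.

Lemma cyc_attr N P f a d u x' : DH N f a d -> cyc (T N P f a) (u :: x') -> Pr d (u :: x') < 1 ->
  attracting_fixed_pt (Defs.comp f ((u :: x') ++ [u])) (a u).
Proof. intros HD Hc Hl. assert (hu := cyc_head_bound _ _ _ _ _ _ Hc).
 destruct (cyc_fix N P f a d (u :: x')) as [e1 e2]; auto. intros k hk; apply HD; auto.
 split. split; auto. apply HD; auto. exists (Pr d (u :: x')). split; auto.
 rewrite Rabs_pos_eq; auto. left. eapply cyc_Pr_pos; eauto. Qed.

Lemma cyc_rep N P f a d u x' : DH N f a d -> cyc (T N P f a) (u :: x') -> 1 < Pr d (u :: x') ->
  repelling_fixed_pt (Defs.comp f ((u :: x') ++ [u])) (a u).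
Proof. intros HD Hc Hl. assert (hu := cyc_head_bound _ _ _ _ _ _ Hc).
 destruct (cyc_fix N P f a d (u :: x')) as [e1 e2]; auto. intros k hk; apply HD; auto.
 split. split; auto. apply HD; auto. exists (Pr d (u :: x')). split; auto.
 rewrite Rabs_pos_eq; auto. lra. Qed.

Lemma G2_edge N P f a d u x' v y' q : G2 N P f -> DH N f a d ->
  cyc (T N P f a) (u :: x') -> cyc (T N P f a) (v :: y') ->
  q <> [] -> chain (T N P f a) (u :: q) -> NoDup (u :: q) -> last (u :: q) 0%nat = v ->
  (Pr d (u :: x') < 1 /\ 1 < Pr d (v :: y')) \/ (1 < Pr d (u :: x') /\ Pr d (v :: y') < 1) -> False.
Proof. intros HG2 HD HX HY hq hch hnd hl Hcase.
 assert (hu := cyc_head_bound _ _ _ _ _ _ HX).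
 assert (Ew : u :: q = removelast (u :: q) ++ [v]) by (rewrite <- hl; apply app_removelast_last; discriminate).
 assert (Hr : removelast (u :: q) = u :: removelast q) by (destruct q; [congruence|reflexivity]).
 assert (Hcomp : Defs.comp f (u :: q) (a u) = a v).
 { rewrite Ew. replace (a u) with (a (hd 0%nat (removelast (u :: q)))) by (rewrite Hr; auto).
   apply (comp_chain N P f a d); auto. intros k hk; apply HD; auto. rewrite Hr; discriminate. rewrite <- Ew; auto. }
 assert (Hst : simple_transition N P (u :: q)).
 { split; auto. split. simpl. destruct q; [congruence|simpl; lia].
   apply (chain_adm N P f a); auto. apply (chain_bound N P f a); auto. }
 destruct (HG2 (u :: q) ((u :: x') ++ [u]) ((v :: y') ++ [v]) (a u) Hst) as [C1 C2].
 apply (cyc_simple_return N P f a (u :: x')); auto. apply (cyc_simple_return N P f a (v :: y')); auto.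
 reflexivity. simpl hd. rewrite <- hl. reflexivity.
 rewrite Hcomp in C1, C2. destruct Hcase as [[h1 h2]|[h1 h2]].
 - apply C1. apply cyc_attr with N P d; auto. apply cyc_rep with N P d; auto.
 - apply C2. apply cyc_rep with N P d; auto. apply cyc_attr with N P d; auto. Qed.

Lemma cyc_rot' N P f a (C : list nat) u : cyc (T N P f a) C -> In u C ->
  exists x', cyc (T N P f a) (u :: x') /\ Permutation C (u :: x').
Proof. apply cyc_rot. Qed.

Lemma G2_contra N P f a d C1 C2 u p : G2 N P f -> DH N f a d ->
  cyc (T N P f a) C1 -> cyc (T N P f a) C2 -> Pr d C1 < 1 -> 1 < Pr d C2 ->
  In u C1 -> chain (T N P f a) (u :: p) -> In (last (u :: p) 0%nat) C2 -> False.
Proof. intros HG2 HD H1 H2 Hl1 Hl2 hu hch hv.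
 destruct (loop_remove _ u p hch) as [q [c1 [c2 c3]]]. rewrite <- c3 in hv. set (v := last (u :: q) 0%nat) in *.
 destruct (cyc_rot' N P f a C1 u H1 hu) as [x' [HX PX]]. rewrite (Pr_perm d _ _ PX) in Hl1.
 destruct q as [|q0 q'].
 - simpl in v. subst v. destruct (cyc_rot' N P f a C2 u H2 hv) as [y' [HY PY]]. rewrite (Pr_perm d _ _ PY) in Hl2.
   destruct y' as [|v' y''].
   + destruct x' as [|v' x''].
     * simpl in Hl1, Hl2. lra.
     * pose proof HX as HX'. destruct HX' as [_ [hnd hchX]]. simpl in hchX. destruct hchX as [huv _].
       assert (hin : In v' C1) by (apply (Permutation_in v' (Permutation_sym PX)); right; left; auto).
       destruct (cyc_rot' N P f a C1 v' H1 hin) as [z' [HZ PZ]].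
       apply (G2_edge N P f a d u [] v' z' [v']); auto. discriminate. simpl; split; auto.
       constructor. intros [e|[]]. subst. inversion hnd; subst. apply H3; left; auto. constructor; auto; constructor.
       right. split. auto. rewrite <- (Pr_perm d _ _ PZ), (Pr_perm d _ _ PX); auto.
   + pose proof HY as HY'. destruct HY' as [_ [hnd hchY]]. simpl in hchY. destruct hchY as [huv _].
     assert (hin : In v' C2) by (apply (Permutation_in v' (Permutation_sym PY)); right; left; auto).
     destruct (cyc_rot' N P f a C2 v' H2 hin) as [z' [HZ PZ]].
     apply (G2_edge N P f a d u x' v' z' [v']); auto. discriminate. simpl; split; auto.
     constructor. intros [e|[]]. subst. inversion hnd; subst. apply H3; left; auto. constructor; auto; constructor.
     left. split. auto. rewrite <- (Pr_perm d _ _ PZ), (Pr_perm d _ _ PY); auto.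
 - destruct (cyc_rot' N P f a C2 v H2 hv) as [y' [HY PY]]. rewrite (Pr_perm d _ _ PY) in Hl2.
   apply (G2_edge N P f a d u x' v y' (q0 :: q')); auto. discriminate. Qed.

Definition ind (p : Prop) : R := if excluded_middle_informative p then 1 else 0.
Lemma ind_T (p : Prop) : p -> ind p = 1. Proof. unfold ind; destruct (excluded_middle_informative p); tauto. Qed.
Lemma ind_F (p : Prop) : ~ p -> ind p = 0. Proof. unfold ind; destruct (excluded_middle_informative p); tauto. Qed.
Lemma ind_01 (p : Prop) : 0 <= ind p <= 1. Proof. unfold ind; destruct (excluded_middle_informative p); lra. Qed.

Lemma chain_mono (E E' : nat -> nat -> Prop) l : (forall i j, E i j -> E' i j) -> chain E l -> chain E' l.
Proof. intros H. induction l as [|x l IH]; simpl; auto. destruct l as [|y l]; auto. intros [h1 h2]; split; auto. Qed.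

Lemma cyc_mono (E E' : nat -> nat -> Prop) l : (forall i j, E i j -> E' i j) -> cyc E l -> cyc E' l.
Proof. intros H [h1 [h2 h3]]. split; auto. split; auto. eapply chain_mono; eauto. Qed.

Lemma Pr_inv d l : Pr (fun i => / d i) l = / Pr d l.
Proof. induction l; simpl. rewrite Rinv_1; auto. rewrite IHl, Rinv_mult; auto. Qed.

Lemma repel_contra N A P f mu a d C : Hyp N A P f mu -> (forall k, (k < N)%nat -> LE mu a k) -> DH N f a d ->
  cyc (T N P f a) C -> 1 < Pr d C -> False.
Proof. intros HH Ha HD HC HCr. pose proof HH as (hN & h01 & hpr & hP & hc & hf & HG1 & HG2 & HG3 & hst).
 set (B := fun k => (k < N)%nat /\ exists p, chain (T N P f a) (k :: p) /\ In (last (k :: p) 0%nat) C).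
 assert (HBpred : forall i k, T N P f a i k -> B k -> B i).
 { intros i k hT [hk [p [hp1 hp2]]]. split. apply hT. exists (k :: p). split. apply chain_cons2; auto. auto. }
 set (E := fun i j => T N P f a i j /\ B i /\ B j).
 assert (HE : forall i j, E i j -> (i < N)%nat /\ (j < N)%nat) by (intros i j [h _]; apply (T_bound N P f a); auto).
 assert (HET : forall i j, E i j -> T N P f a i j) by (intros i j [h _]; auto).
 assert (Hcyc : forall l, cyc E l -> 1 < Pr d l).
 { intros l hl. assert (hlT : cyc (T N P f a) l) by (eapply cyc_mono; eauto).
   assert (hne1 : Pr d l <> 1). { apply (cyc_ne1 N P f a d l HG1); auto. intros k hk; apply HD; auto. intros k hk; apply HD; auto. }
   destruct (Rtotal_order (Pr d l) 1) as [hlt|[heq|hgt]]; [|congruence|auto]. exfalso.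
   destruct l as [|u l']. destruct hl; congruence.
   pose proof hl as [_ [_ hch]]. destruct (chain_src E (u :: l') _ u hch (or_introl eq_refl)) as [y [_ [[hu [p [hp1 hp2]]] _]]].
   apply (G2_contra N P f a d (u :: l') C u p); auto. left; auto. }
 assert (HdN : forall k, (k < N)%nat -> 0 < d k) by (intros k hk; apply HD; auto).
 assert (Hcyc' : forall l, cyc E l -> Pr (fun i => / d i) l < 1).
 { intros l hl. rewrite Pr_inv. specialize (Hcyc l hl). apply (Rmult_lt_reg_l (Pr d l)). lra. rewrite Rinv_r; lra. }
 destruct (cycle_margin N E (fun i => / d i) HE) as [t [ht1 ht2]]; auto. intros i hi; apply Rinv_0_lt_compat; auto.
 destruct (potential N E (fun i => t * / d i) HE) as [phi [hphi1 hphi2]]; auto.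
 intros i hi. apply Rmult_lt_0_compat; [lra|apply Rinv_0_lt_compat; auto].
 set (s := fun k => / phi k).
 assert (Hs : forall k, (k < N)%nat -> 0 < s k) by (intros k hk; unfold s; apply Rinv_0_lt_compat; specialize (hphi1 k hk); lra).
 set (th := sqrt t).
 assert (Hth : th * th = t) by (apply sqrt_sqrt; lra).
 assert (Hth1 : 1 < th). { assert (0 <= th) by apply sqrt_pos. nra. }
 assert (Hsk : forall i k, E i k -> s k * th * th <= d i * s i).
 { intros i k hik. destruct (HE i k hik) as [hi hk]. specialize (hphi2 i k hik). cbv beta in hphi2.
   unfold s. rewrite Rmult_assoc, Hth. assert (0 < d i) by auto. assert (1 <= phi i) by auto. assert (1 <= phi k) by auto.
   apply (Rmult_le_reg_r (phi k * phi i)). nra.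
   replace (/ phi k * t * (phi k * phi i)) with (t * phi i) by (field; lra).
   replace (d i * / phi i * (phi k * phi i)) with (d i * phi k) by (field; lra).
   apply (Rmult_le_reg_l (/ d i)). apply Rinv_0_lt_compat; lra. replace (/ d i * (d i * phi k)) with (phi k) by (field; lra). lra. }
 assert (Hmu : forall i, (i < N)%nat -> finite_measure (mu i) /\ mu i (fun x => ~ inI x) = 0) by (intros i hi; apply (stat_meas N P f mu i hst hi)).
 assert (Key : exists e0, 0 < e0 /\ forall e, 0 < e -> e < e0 -> forall k, (k < N)%nat -> forall i, (i < N)%nat -> B k ->
   P i k * mu i (fun x => inI x /\ f i x < a k + e * s k) <= ind (E i k) * P i k * mu i (fun x => x < a i + e / th * s i)).
 { apply (fin_min N (fun k e => forall i, (i < N)%nat -> B k ->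
     P i k * mu i (fun x => inI x /\ f i x < a k + e * s k) <= ind (E i k) * P i k * mu i (fun x => x < a i + e / th * s i))).
   intros k hk.
   apply (fin_min N (fun i e => B k ->
     P i k * mu i (fun x => inI x /\ f i x < a k + e * s k) <= ind (E i k) * P i k * mu i (fun x => x < a i + e / th * s i))).
   intros i hi. destruct (Hmu i hi) as [Hmi Hni]. destruct (Ha i hi) as [ai1 [ai2 [ai3 [ai4 ai5]]]].
   assert (hPik : 0 <= P i k) by (apply (proj1 hP); auto).
   assert (Hind := ind_01 (E i k)).
   assert (Hpre : forall e, borel (fun x => inI x /\ f i x < a k + e * s k)) by (intros e; apply (gm_pre_borel (f i) (fun z => z < a k + e * s k)); [apply hf; auto|apply convex_lt]).
   assert (Hray : forall e, 0 <= mu i (fun x => x < a i + e / th * s i)) by (intros e; apply meas_nonneg; auto; apply borel_lt).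
   assert (Hskp := Hs k hk). assert (Hsip := Hs i hi).
   destruct (classic (admissible P i k)) as [hadm|hnadm].
   2:{ exists 1. split. lra. intros e he1 he2 hBk. rewrite (P_nonadm N P i k hP hi hk hnadm). lra. }
   destruct (Req_dec (f i (a i)) (a k)) as [htight|hnt].
   - assert (HdI := HdN i hi). destruct (HD i hi) as [hder _].
     assert (heta : 0 < d i * (1 - / th)).
     { apply Rmult_lt_0_compat; auto. assert (/ th < 1). rewrite <- Rinv_1. apply Rinv_lt_contravar; lra. lra. }
     destruct (hder _ heta) as [del hdel].
     assert (Hdel := cond_pos del).
     exists (del * d i / (s k * th)). split. apply Rdiv_lt_0_compat; [apply Rmult_lt_0_compat; auto|apply Rmult_lt_0_compat; lra].
     intros e he1 he2 hBk.
     assert (hT : T N P f a i k) by (split; [auto|split; [auto|split; auto]]).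
     assert (hE : E i k) by (split; [auto|split; [apply (HBpred i k); auto|auto]]).
     rewrite (ind_T _ hE). rewrite Rmult_1_l. apply Rmult_le_compat_l; auto.
     set (tau := e * s k * th / d i).
     assert (htau0 : 0 < tau) by (unfold tau; apply Rdiv_lt_0_compat; auto; apply Rmult_lt_0_compat; [apply Rmult_lt_0_compat|]; lra).
     assert (htau1 : tau < del).
     { assert (h1 : e * (s k * th) < del * d i).
       { apply (Rmult_lt_compat_r (s k * th)) in he2; [|nra]. replace (del * d i / (s k * th) * (s k * th)) with (del * d i) in he2 by (field; nra). lra. }
       unfold tau. apply (Rmult_lt_reg_r (d i)); auto. replace (e * s k * th / d i * d i) with (e * (s k * th)) by (field; lra). lra. }
     assert (htau2 : tau <= e / th * s i).
     { apply (Rmult_le_reg_r (th * d i)); [nra|]. replace (tau * (th * d i)) with (e * (s k * th * th)) by (unfold tau; field; lra).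
       replace (e / th * s i * (th * d i)) with (e * (d i * s i)) by (field; lra). apply Rmult_le_compat_l; [lra|]. apply Hsk; auto. }
     apply meas_mono; auto; [apply borel_lt|]. intros x [hx hfx].
     assert (x < a i + tau); [|lra]. apply Rnot_le_lt; intros hge.
     assert (hI : inI (a i + tau)) by (unfold inI in *; lra).
     specialize (hdel tau ltac:(lra)). rewrite Rabs_pos_eq in hdel by lra. specialize (hdel htau1).
     apply Rabs_def2 in hdel. destruct hdel as [_ hdel].
     set (q := (f i (a i + tau) - f i (a i)) / tau) in hdel.
     assert (Eq : f i (a i + tau) - f i (a i) = q * tau) by (unfold q; field; lra).
     assert (q * tau > d i * / th * tau) by (apply Rmult_lt_compat_r; lra).
     assert (Eq2 : d i * / th * tau = e * s k) by (unfold tau; field; lra).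
     assert (f i (a i + tau) <= f i x) by (apply gm_mono; auto; lra).
     lra.
   - pose proof (adm_ge N A P f mu a i k HH Ha hi hk hadm) as hge.
     assert (hg : 0 < f i (a i) - a k) by lra.
     exists ((f i (a i) - a k) / s k). split. apply Rdiv_lt_0_compat; lra.
     intros e he1 he2 hBk. assert (hes : e * s k < f i (a i) - a k).
     { apply (Rmult_lt_compat_r (s k)) in he2; auto. replace ((f i (a i) - a k) / s k * s k) with (f i (a i) - a k) in he2 by (field; lra). lra. }
     rewrite (meas_null_sub (mu i) _ (fun x => x < a i)); auto. rewrite Rmult_0_r.
     apply Rmult_le_pos; [apply Rmult_le_pos|]; auto; lra. apply borel_lt.
     intros x [hx hfx]. apply Rnot_le_lt; intros hxa. assert (f i (a i) <= f i x) by (apply gm_mono; auto; unfold inI; lra). lra. }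
 destruct Key as [e0 [he0 Key]].
 set (m := fun i e => mu i (fun x => x < a i + e * s i)).
 set (X := fun i => Rsum N (fun k => ind (B k) * (ind (E i k) * P i k))).
 set (e := e0 / 2). set (e' := e / th).
 assert (He : 0 < e) by (unfold e; lra). assert (He' : 0 < e') by (unfold e'; apply Rdiv_lt_0_compat; lra).
 assert (He'e : e' < e). { unfold e'. apply (Rmult_lt_reg_r th); [lra|]. replace (e / th * th) with e by (field; lra). nra. }
 assert (Hm0 : forall i r, (i < N)%nat -> 0 <= m i r) by (intros i r hi; apply meas_nonneg; [apply Hmu; auto|apply borel_lt]).
 assert (Hmpos : forall i r, (i < N)%nat -> B i -> 0 < r -> 0 < m i r).
 { intros i r hi hBi hr. destruct (Ha i hi) as [_ [_ [hsupp _]]]. destruct (Hmu i hi) as [Hmi _].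
   apply Rlt_le_trans with (mu i (fun y => a i - r * s i < y < a i + r * s i)). apply hsupp. apply Rmult_lt_0_compat; auto.
   apply meas_mono; auto. apply borel_open. apply borel_lt. intros; lra. }
 assert (I1 : Rsum N (fun k => ind (B k) * m k e) <= Rsum N (fun i => m i e' * X i)).
 { apply Rle_trans with (Rsum N (fun k => Rsum N (fun i => ind (B k) * (ind (E i k) * P i k) * m i e'))).
   - apply Rsum_le. intros k hk. destruct (classic (B k)) as [hBk|hBk].
     + rewrite (ind_T _ hBk). unfold m at 1. destruct hst as [hpu hst']. rewrite hst'; auto; [|apply borel_lt].
       apply Rle_trans with (Rsum N (fun i => ind (E i k) * P i k * mu i (fun x => x < a i + e / th * s i))).
       rewrite Rmult_1_l. apply Rsum_le. intros i hi. apply Key; auto. unfold e; lra.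
       apply Rsum_le. intros i hi. unfold m, e'. lra.
     + rewrite (ind_F _ hBk). rewrite (Rsum_ext N _ (fun _ => 0)). rewrite Rsum_zero. lra. intros; ring.
   - rewrite Rsum_swap. apply Rsum_le. intros i hi. unfold X. rewrite <- Rsum_scal. apply Rsum_le. intros k hk. lra. }
 assert (I2 : forall i, (i < N)%nat -> 0 <= X i <= ind (B i)).
 { intros i hi. split. apply Rsum_nonneg. intros k hk. pose proof (ind_01 (B k)). pose proof (ind_01 (E i k)).
   pose proof (proj1 hP i k hi hk). apply Rmult_le_pos; [lra|apply Rmult_le_pos; lra].
   destruct (classic (B i)) as [hBi|hBi].
   - rewrite (ind_T _ hBi). rewrite <- (proj2 hP i hi). apply Rsum_le. intros k hk. pose proof (ind_01 (B k)). pose proof (ind_01 (E i k)).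
     pose proof (proj1 hP i k hi hk). apply Rle_trans with (1 * (1 * P i k)); [|lra].
     apply Rmult_le_compat; try lra. apply Rmult_le_pos; lra. apply Rmult_le_compat_r; lra.
   - rewrite (ind_F _ hBi). unfold X. rewrite (Rsum_ext N _ (fun _ => 0)). rewrite Rsum_zero; lra.
     intros k hk. rewrite (ind_F (E i k)). ring. intros [_ [h _]]; auto. }
 assert (I3 : Rsum N (fun i => ind (B i) * m i e') <= Rsum N (fun k => ind (B k) * m k e)).
 { apply Rsum_le. intros i hi. apply Rmult_le_compat_l. apply ind_01. unfold m. apply meas_mono. apply Hmu; auto. apply borel_lt. apply borel_lt.
   intros x hx. assert (e' * s i <= e * s i) by (apply Rmult_le_compat_r; [left; apply Hs; auto|lra]). lra. }
 assert (Xge : forall i, (i < N)%nat -> B i -> 1 <= X i).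
 { intros i hi hBi. apply Rnot_lt_le. intros hX.
   assert (Rsum N (fun i => m i e' * X i) + m i e' * (1 - X i) <= Rsum N (fun i => ind (B i) * m i e')).
   { apply Rsum_gap with i; auto. intros j hj. specialize (I2 j hj). specialize (Hm0 j e' hj). nra.
     rewrite (ind_T _ hBi). lra. }
   assert (0 < m i e' * (1 - X i)) by (apply Rmult_lt_0_compat; [apply Hmpos; auto|lra]). lra. }
 assert (Hclose : forall i k, (i < N)%nat -> (k < N)%nat -> admissible P i k -> B i -> B k /\ f i (a i) = a k).
 { intros i k hi hk hadm hBi. apply NNPP. intros hn.
   assert (X i + P i k <= Rsum N (fun k => P i k)).
   { apply Rsum_gap with k; auto. intros j hj. pose proof (ind_01 (B j)). pose proof (ind_01 (E i j)).
     pose proof (proj1 hP i j hi hj). apply Rle_trans with (1 * (1 * P i j)); [|lra].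
     apply Rmult_le_compat; try lra. apply Rmult_le_pos; lra. apply Rmult_le_compat_r; lra.
     rewrite (ind_F (E i k)). lra. intros [[_ [_ [_ ht]]] [_ hBk]]. apply hn; auto. }
   rewrite (proj2 hP i hi) in H. specialize (Xge i hi hBi). unfold admissible in hadm. lra. }
 destruct C as [|u C']. destruct HC; congruence.
 assert (hu : B u). { split. apply (cyc_head_bound N P f a u C'); auto. exists []. split; simpl; auto. }
 assert (HBall : forall k, (k < N)%nat -> B k).
 { intros k hk. apply (irred_succ N A P B h01 hpr hc) with u; auto. intros l j hl hj hadm hBl. apply (Hclose l j); auto.
   apply hu. }
 apply HG3. exists a. split. intros i hi; apply HD; auto.
 intros i j hi hj hadm. apply (Hclose i j); auto.
Qed.

Lemma lower_lemma N A P f mu : Hyp N A P f mu ->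
  exists a, (forall k, (k < N)%nat -> LE mu a k) /\
  forall eps, 0 < eps -> exists delta : nat -> R,
    (forall k, (k < N)%nat -> 0 < delta k /\ delta k < eps /\ delta k < a k) /\
    forall k m x, (k < N)%nat -> (m < N)%nat -> admissible P k m -> inI x -> a k - delta k <= x -> a m - delta m < f k x.
Proof. intros HH. pose proof HH as (hN & h01 & hpr & hP & hc & hf & HG1 & HG2 & HG3 & hst).
 destruct (endpoints N A P f mu HH) as [a Ha]. exists a. split; auto.
 destruct (gm_DF N f hf) as [DF HDF].
 set (d := fun k => DF k (a k)).
 assert (HaI : forall k, (k < N)%nat -> inI (a k)) by (intros k hk; destruct (Ha k hk) as [h1 [h2 _]]; unfold inI; lra).
 assert (HD : DH N f a d).
 { intros k hk. destruct (HDF k hk) as [h1 [h2 _]]. split. apply h1; auto. split. auto.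
   assert (0 <= d k). { apply (gm_deriv_nonneg (f k) (a k)); [auto| |apply h1; auto]. destruct (Ha k hk) as [g1 [g2 _]]; lra. }
   specialize (h2 (a k) (HaI k hk)). unfold d in *. lra. }
 assert (Hatt : forall c, cyc (T N P f a) c -> Pr d c < 1).
 { intros c hcy. assert (Pr d c <> 1). apply (cyc_ne1 N P f a d c HG1); auto. intros k hk; apply HD; auto.
   destruct (Rtotal_order (Pr d c) 1) as [h|[h|h]]; auto. congruence. exfalso. apply (repel_contra N A P f mu a d c); auto. }
 assert (HdN : forall k, (k < N)%nat -> 0 < d k) by (intros k hk; apply HD; auto).
 destruct (cycle_margin N (T N P f a) d (T_bound N P f a) HdN Hatt) as [th [hth1 hth2]].
 destruct (potential N (T N P f a) (fun i => th * d i) (T_bound N P f a)) as [phi [hphi1 hphi2]]; auto.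
 intros i hi; apply Rmult_lt_0_compat; auto; lra.
 intros eps heps.
 destruct (fin_min N (fun k s => forall m, (m < N)%nat -> (s * phi k < eps /\ s * phi k < a k) /\
      (admissible P k m -> a m - s * phi m < f k (a k - s * phi k)))) as [s0 [hs0 Hs0]].
 { intros k hk.
   apply (fin_min N (fun m s => (s * phi k < eps /\ s * phi k < a k) /\ (admissible P k m -> a m - s * phi m < f k (a k - s * phi k)))).
   intros m hm. destruct (Ha k hk) as [ak1 [ak2 _]]. assert (hp := hphi1 k hk). assert (hpm := hphi1 m hm).
   assert (H1 : exists t1, 0 < t1 /\ forall s, 0 < s -> s < t1 -> s * phi k < eps /\ s * phi k < a k).
   { exists (Rmin eps (a k) / phi k). split. apply Rdiv_lt_0_compat; [apply Rmin_pos|]; lra.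
     intros s hs1 hs2. apply (Rmult_lt_compat_r (phi k)) in hs2; [|lra].
     replace (Rmin eps (a k) / phi k * phi k) with (Rmin eps (a k)) in hs2 by (field; lra).
     pose proof (Rmin_l eps (a k)). pose proof (Rmin_r eps (a k)). lra. }
   destruct H1 as [t1 [ht1 Ht1]].
   destruct (classic (admissible P k m)) as [hadm|hnadm].
   2:{ exists t1. split; auto. intros s hs1 hs2. split; auto. intros; contradiction. }
   destruct (HD k hk) as [hder [hI hdk]].
   destruct (Req_dec (f k (a k)) (a m)) as [htight|hnt].
   - assert (hT : T N P f a k m) by (split; [auto|split; [auto|split; auto]]).
     specialize (hphi2 k m hT). cbv beta in hphi2.
     assert (heta : 0 < (th - 1) * d k) by (apply Rmult_lt_0_compat; lra).
     destruct (hder _ heta) as [del hdel]. pose proof (cond_pos del) as hdel0.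
     exists (Rmin t1 (del / phi k)). split. apply Rmin_pos; auto. apply Rdiv_lt_0_compat; lra.
     intros s hs1 hs2. assert (hst1 : s < t1) by (apply Rlt_le_trans with (1 := hs2); apply Rmin_l).
     assert (hst2 : s < del / phi k) by (apply Rlt_le_trans with (1 := hs2); apply Rmin_r).
     split; auto. intros _. set (tau := s * phi k).
     assert (htau0 : 0 < tau) by (unfold tau; apply Rmult_lt_0_compat; lra).
     assert (htau1 : tau < del). { unfold tau. apply (Rmult_lt_compat_r (phi k)) in hst2; [|lra].
       replace (del / phi k * phi k) with (pos del) in hst2 by (field; lra). lra. }
     specialize (hdel (- tau) ltac:(lra)). rewrite Rabs_Ropp, Rabs_pos_eq in hdel by lra. specialize (hdel htau1).
     apply Rabs_def2 in hdel. destruct hdel as [hdel _].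
     replace (a k + - tau) with (a k - tau) in hdel by ring.
     set (q := (f k (a k - tau) - f k (a k)) / - tau) in hdel.
     assert (Eq : f k (a k - tau) - f k (a k) = - (q * tau)) by (unfold q; field; lra).
     assert (q * tau < th * d k * tau) by (apply Rmult_lt_compat_r; lra).
     assert (th * d k * tau <= s * phi m). { unfold tau. replace (th * d k * (s * phi k)) with (s * (th * d k * phi k)) by ring.
       apply Rmult_le_compat_l; lra. }
     fold tau. lra.
   - assert (hge := adm_ge N A P f mu a k m HH Ha hk hm hadm).
     assert (hg : 0 < f k (a k) - a m) by lra.
     destruct (deriv_cont (f k) (a k) (d k) hder _ hg) as [del [hdel0 hdel]].
     exists (Rmin t1 (del / phi k)). split. apply Rmin_pos; auto. apply Rdiv_lt_0_compat; lra.
     intros s hs1 hs2. assert (hst1 : s < t1) by (apply Rlt_le_trans with (1 := hs2); apply Rmin_l).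
     assert (hst2 : s < del / phi k) by (apply Rlt_le_trans with (1 := hs2); apply Rmin_r).
     split; auto. intros _.
     assert (s * phi k < del). { apply (Rmult_lt_compat_r (phi k)) in hst2; [|lra].
       replace (del / phi k * phi k) with del in hst2 by (field; lra). lra. }
     specialize (hdel (a k - s * phi k)). rewrite Rabs_left1 in hdel by nra. specialize (hdel ltac:(lra)).
     apply Rabs_def2 in hdel. assert (0 < s * phi m) by nra. lra. }
 exists (fun k => s0 / 2 * phi k). split.
 - intros k hk. destruct (Hs0 (s0 / 2) ltac:(lra) ltac:(lra) k hk k hk) as [[h1 h2] _].
   split; auto. apply Rmult_lt_0_compat. lra. specialize (hphi1 k hk); lra.
 - intros k m x hk hm hadm hx hxk. destruct (Hs0 (s0 / 2) ltac:(lra) ltac:(lra) k hk m hm) as [[h1 h2] h3].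
   specialize (h3 hadm). assert (f k (a k - s0 / 2 * phi k) <= f k x).
   { apply gm_mono; auto. unfold inI in *. split; [|lra]. lra. }
   lra.
Qed.

Definition fR (f : nat -> R -> R) : nat -> R -> R := fun k x => 1 - f k (1 - x).
Definition muR (mu : nat -> (R -> Prop) -> R) : nat -> (R -> Prop) -> R := fun k S => mu k (fun x => S (1 - x)).

Lemma refl_deriv g x l : derivable_pt_lim g (1 - x) l -> derivable_pt_lim (fun y => 1 - g (1 - y)) x l.
Proof. intros H eps he. destruct (H eps he) as [del hdel]. exists del. intros h hh hd.
 specialize (hdel (- h) ltac:(lra)). rewrite Rabs_Ropp in hdel. specialize (hdel hd).
 replace (1 - (x + h)) with (1 - x + - h) by ring.
 replace ((1 - g (1 - x + - h) - (1 - g (1 - x))) / h) with ((g (1 - x + - h) - g (1 - x)) / - h) by (field; lra). auto. Qed.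

Lemma inI_refl x : inI (1 - x) <-> inI x. Proof. unfold inI; split; intros; lra. Qed.
Lemma inI_r1 x : inI x -> inI (1 - x). Proof. unfold inI; intros; lra. Qed.
Lemma inI_r2 x : inI (1 - x) -> inI x. Proof. unfold inI; intros; lra. Qed.

Lemma gm_refl g : good_map g -> good_map (fun x => 1 - g (1 - x)).
Proof. intros [h1 [h2 [df [hd1 [hd2 hd3]]]]]. split; [|split].
 - intros x hx. apply inI_r1 in hx. specialize (h1 _ hx). lra.
 - intros x y hx hy hxy. apply inI_r1 in hx. apply inI_r1 in hy. assert (g (1 - y) < g (1 - x)) by (apply h2; auto; lra). lra.
 - exists (fun x => df (1 - x)). split; [|split].
   + intros x hx. apply refl_deriv. apply hd1. apply inI_r1; auto.
   + intros x hx eps he. destruct (hd2 (1 - x) (inI_r1 x hx) eps he) as [del [hdel H]].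
     exists del. split; auto. intros y hy hxy. apply H. apply inI_r1; auto. replace (1 - y - (1 - x)) with (- (y - x)) by ring.
     rewrite Rabs_Ropp; auto.
   + intros x hx. apply hd3. apply inI_r1; auto. Qed.

Lemma comp_refl f w : Defs.comp (fR f) w = fun x => 1 - Defs.comp f w (1 - x).
Proof. apply functional_extensionality. intros x. revert x. induction w as [|k w IH]; intros x; simpl. ring.
 destruct w as [|y w]. ring. rewrite IH. unfold fR. replace (1 - (1 - f k (1 - x))) with (f k (1 - x)) by ring. auto. Qed.

Lemma refl_attr g q : attracting_fixed_pt (fun x => 1 - g (1 - x)) q -> attracting_fixed_pt g (1 - q).
Proof. intros [[hq hfix] [l [hd hl]]]. split. split. apply inI_r1; auto. lra.
 exists l. split; auto. replace g with (fun y => 1 - (fun x => 1 - g (1 - x)) (1 - y)).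
 apply (refl_deriv (fun x => 1 - g (1 - x)) (1 - q) l). replace (1 - (1 - q)) with q by ring. auto.
 apply functional_extensionality; intros y. replace (1 - (1 - y)) with y by ring. ring. Qed.

Lemma refl_rep g q : repelling_fixed_pt (fun x => 1 - g (1 - x)) q -> repelling_fixed_pt g (1 - q).
Proof. intros [[hq hfix] [l [hd hl]]]. split. split. apply inI_r1; auto. lra.
 exists l. split; auto. replace g with (fun y => 1 - (fun x => 1 - g (1 - x)) (1 - y)).
 apply (refl_deriv (fun x => 1 - g (1 - x)) (1 - q) l). replace (1 - (1 - q)) with q by ring. auto.
 apply functional_extensionality; intros y. replace (1 - (1 - y)) with y by ring. ring. Qed.

Lemma borel_refl S : borel S -> borel (fun x => S (1 - x)).
Proof. intros H SS HS Hi. set (S' := fun B : R -> Prop => SS (fun x => B (1 - x))).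
 assert (HS' : sigma_algebra S').
 { destruct HS as [h1 [h2 h3]]. split; [|split].
   - exact h1.
   - intros B hB. apply h2 in hB. exact hB.
   - intros Bn hB. apply (h3 (fun n x => Bn n (1 - x))). intros n; apply hB. }
 apply (H S' HS'). intros a b. unfold S'.
 replace (fun x => a < 1 - x < b) with (fun x => 1 - b < x < 1 - a). apply Hi. apply set_ext; intros; lra. Qed.

Lemma fm_refl m : finite_measure m -> finite_measure (fun S => m (fun x => S (1 - x))).
Proof. intros [h1 [h2 h3]]. split; [|split].
 - exact h1.
 - intros S hS. apply h2. apply borel_refl; auto.
 - intros An hB hd. apply (h3 (fun n x => An n (1 - x))). intros n; apply borel_refl; auto.
   intros n k x hnk. apply hd; auto. Qed.

Lemma supp_refl m x : supp (fun S => m (fun y => S (1 - y))) x <-> supp m (1 - x).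
Proof. unfold supp. assert (E : forall d, (fun y => (fun z => x - d < z < x + d) (1 - y)) = (fun y => 1 - x - d < y < 1 - x + d)).
 { intros d. apply set_ext. intros y; cbv beta; lra. }
 split; intros H d hd; specialize (H d hd). rewrite E in H; auto. rewrite E; auto. Qed.

Lemma hyp_refl N A P f mu : Hyp N A P f mu -> Hyp N A P (fR f) (muR mu).
Proof. intros (hN & h01 & hpr & hP & hc & hf & HG1 & HG2 & HG3 & hst).
 split; auto. split; auto. split; auto. split; auto. split; auto. split; [|split; [|split; [|split]]].
 - intros k hk. apply gm_refl; auto.
 - intros w q l hw hfix hd. rewrite comp_refl in hfix, hd.
   apply (HG1 w (1 - q) l hw). destruct hfix as [hq hfx]. split. apply inI_r1; auto. cbv beta in hfx; lra.
   replace (Defs.comp f w) with (fun y => 1 - (fun x => 1 - Defs.comp f w (1 - x)) (1 - y)).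
   apply (refl_deriv (fun x => 1 - Defs.comp f w (1 - x)) (1 - q) l). replace (1 - (1 - q)) with q by ring. auto.
   apply functional_extensionality; intros y. replace (1 - (1 - y)) with y by ring. ring.
 - intros w u v q hw hu hv e1 e2. rewrite !comp_refl. destruct (HG2 w u v (1 - q) hw hu hv e1 e2) as [c1 c2]. split.
   + intros ha hr. apply refl_attr in ha. apply refl_rep in hr. cbv beta in hr. replace (1 - (1 - Defs.comp f w (1 - q))) with (Defs.comp f w (1 - q)) in hr by ring.
     apply (c1 ha hr).
   + intros ha hr. apply refl_rep in ha. apply refl_attr in hr. cbv beta in hr. replace (1 - (1 - Defs.comp f w (1 - q))) with (Defs.comp f w (1 - q)) in hr by ring.
     apply (c2 ha hr).
 - intros [a' [ha1 ha2]]. apply HG3. exists (fun i => 1 - a' i). split. intros i hi; apply inI_r1, ha1; auto.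
   intros i j hi hj hadm. specialize (ha2 i j hi hj hadm). unfold fR in ha2. lra.
 - destruct hst as [[hmu hsum] hst]. split. split.
   + intros k hk. destruct (hmu k hk) as [hm hn]. split. apply fm_refl; auto. unfold muR.
     rewrite <- hn. f_equal. apply set_ext. intros x. rewrite inI_refl. tauto.
   + exact hsum.
   + intros j S hj hS. unfold muR. rewrite hst; auto; [|apply borel_refl; auto].
     apply Rsum_ext. intros i hi. f_equal. f_equal. apply set_ext. intros x. rewrite inI_refl. unfold fR.
     replace (1 - (1 - x)) with x by ring. tauto. Qed.

Theorem mainTheorem3
  (N : nat) (A : nat -> nat -> nat) (P : nat -> nat -> R) (f : nat -> R -> R)
  (mu : nat -> (R -> Prop) -> R)
  (hN : (1 <= N)%nat)
  (hA01 : zero_one_matrix N A) (hAprim : has_positive_power N A)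
  (hP : stochastic N P) (hPA : compatible N A P)
  (hf : forall k, (k < N)%nat -> good_map (f k))
  (hG1 : G1 N P f) (hG2 : G2 N P f) (hG3 : G3 N P f)
  (hmu : ergodic N P f mu) :
  forall eps, 0 < eps ->
    exists D : nat -> R -> Prop,
      trapping N P f D /\
      forall k, (k < N)%nat ->
        (forall x, I_mu (mu k) x -> D k x) /\
        (forall x, D k x -> U_eps eps (I_mu (mu k)) x).
Proof.
 intros eps heps.
 assert (HH : Hyp N A P f mu) by exact (conj hN (conj hA01 (conj hAprim (conj hP (conj hPA (conj hf (conj hG1 (conj hG2 (conj hG3 (proj1 hmu)))))))))).
 destruct (lower_lemma N A P f mu HH) as [a [Ha Hlow]].
 destruct (lower_lemma N A P (fR f) (muR mu) (hyp_refl N A P f mu HH)) as [a' [Ha' Hup]].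
 destruct (Hlow eps heps) as [dl [Hdl1 Hdl2]].
 destruct (Hup eps heps) as [du [Hdu1 Hdu2]].
 set (b := fun k => 1 - a' k).
 assert (Hb : forall k, (k < N)%nat -> supp (mu k) (b k) /\ forall x, supp (mu k) x -> x <= b k).
 { intros k hk. destruct (Ha' k hk) as [_ [_ [h3 [h4 _]]]]. split.
   - apply supp_refl in h3. exact h3.
   - intros x hx. assert (supp (muR mu k) (1 - x)). { apply supp_refl. replace (1 - (1 - x)) with x by ring. auto. }
     specialize (h4 _ H). unfold b; lra. }
 assert (Hab : forall k, (k < N)%nat -> a k <= b k).
 { intros k hk. destruct (Ha k hk) as [_ [_ [_ [h4 _]]]]. apply h4. apply Hb; auto. }
 exists (fun k x => a k - dl k <= x <= b k + du k). split.
 - split.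
   + intros k hk. split. exists (a k). specialize (Hab k hk). destruct (Hdl1 k hk). destruct (Hdu1 k hk). lra.
     split. intros x y z hx hy hz. lra.
     intros x hx. destruct (Hdl1 k hk) as [g1 [g2 g3]]. destruct (Hdu1 k hk) as [u1 [u2 u3]]. unfold b in hx. unfold inI; lra.
   + intros k m x hk hm hadm hx.
     assert (hxI : inI x). { destruct (Hdl1 k hk) as [g1 [g2 g3]]. destruct (Hdu1 k hk) as [u1 [u2 u3]]. unfold b in hx. unfold inI; lra. }
     assert (h1 : a m - dl m < f k x) by (apply Hdl2; auto; lra).
     assert (h2 : a' m - du m < fR f k (1 - x)). { apply Hdu2; auto. apply inI_r1; auto. unfold b in hx; lra. }
     unfold fR in h2. replace (1 - (1 - x)) with x in h2 by ring.
     assert (h3 : f k x < b m + du m) by (unfold b; lra).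
     split. lra. exists (Rmin (f k x - (a m - dl m)) (b m + du m - f k x)). split. apply Rmin_pos; lra.
     intros y hy hxy. pose proof (Rmin_l (f k x - (a m - dl m)) (b m + du m - f k x)).
     pose proof (Rmin_r (f k x - (a m - dl m)) (b m + du m - f k x)). apply Rabs_def2 in hxy. lra.
 - intros k hk. destruct (Hdl1 k hk) as [g1 [g2 g3]]. destruct (Hdu1 k hk) as [u1 [u2 u3]].
   destruct (Ha k hk) as [a1 [a2 [a3 [a4 a5]]]]. destruct (Hb k hk) as [b1 b2]. specialize (Hab k hk). split.
   + intros x [a0 [b0 [h1 [h2 h3]]]]. specialize (a4 a0 h1). specialize (b2 b0 h2). lra.
   + intros x hx. assert (HI : forall y, a k <= y <= b k -> I_mu (mu k) y) by (intros y hy; exists (a k), (b k); auto).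
     destruct (Rlt_le_dec x (a k)).
     * exists (a k). split. apply HI; lra. rewrite Rabs_left1; lra.
     * destruct (Rle_lt_dec x (b k)).
       -- exists x. split. apply HI; lra. rewrite Rminus_diag, Rabs_R0; lra.
       -- exists (b k). split. apply HI; lra. rewrite Rabs_pos_eq; lra.
Qed.
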